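(* Let $\mathbf{RCat}_{\mathsf{lax}}$, $\mathbf{RCat}$, $\mathbf{LCat}_{\mathsf{lax}}$, $\mathbf{LCat}$ be the 2-categories described in the context, and let $\mathbf{L}_{\mathsf{lax}}:\mathbf{RCat}_{\mathsf{lax}}\to\mathbf{LCat}_{\mathsf{lax}}$ and $\mathbf{R}_{\mathsf{lax}}:\mathbf{LCat}_{\mathsf{lax}}\to\mathbf{RCat}_{\mathsf{lax}}$ be the 2-functors described in the context. Then $\mathbf{L}_{\mathsf{lax}}$ and $\mathbf{R}_{\mathsf{lax}}$ form a 2-equivalence $\mathbf{RCat}_{\mathsf{lax}}\simeq\mathbf{LCat}_{\mathsf{lax}}$. Moreover, this 2-equivalence restricts to a 2-equivalence $\mathbf{RCat}\simeq\mathbf{LCat}$.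
   Context: Composition is written diagrammatically: $fg$ means first $f$ then $g$. Restriction categories. A restriction category is a category $\mathbb{X}$ with an assignment to each morphism $f:A\to B$ of an endomorphism $\bar f:A\to A$ such that: (R.1) $\bar f f=f$; (R.2) $\bar f\bar g=\bar g\bar f$ for $f:A\to B$, $g:A\to C$; (R.3) $\bar g\bar f=\overline{\bar g f}$ for $f:A\to B$, $g:A\to C$; (R.4) $f\bar g=\overline{fg}f$ for $f:A\to B$, $g:B\to C$. A morphism $f$ is total if $\bar f=\mathrm{id}$; a restriction idempotent is an endomorphism $e$ with $e=\bar e$. A restriction functor is a functor $F$ with $F(\bar f)=\overline{F f}$. A restriction natural transformation $\varphi:F\Rightarrow G$ between restriction functors $F,G:\mathbb{X}\to\mathbb{X}'$ is a family of total morphisms $\varphi_A:FA\to GA$ such that $(Ff)\varphi_B=(F\bar f)\varphi_A(Gf)$ for every $f:A\to B$. A total natural transformation is a natural transformation all of whose components are total. $\mathbf{RCat}_{\mathsf{lax}}$ is the 2-category of restriction categories, restriction functors and restriction natural transformations; $\mathbf{RCat}$ is its 2-subcategory with the same objects and 1-cells and with total natural transformations as 2-cells. Local categories. A local category is a category $\mathbb{C}$ with an assignment to each object $M$ of an object $\mathsf{L}M$ and a morphism $\eta_M:M\to\mathsf{L}M$ (no action on morphisms is required) such that: (L.1) $\mathsf{L}\mathsf{L}M=\mathsf{L}M$ and $\eta_{\mathsf{L}M}=\mathrm{id}_{\mathsf{L}M}$; (L.2) each $\eta_M$ is monic; (L.3) for every object $M$ and morphism $f:N\to\mathsf{L}M$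 there is a pullback square of $\eta_M$ along $f$, with leg $m:P\to N$, such that $\mathsf{L}P=\mathsf{L}N$ and $m\eta_N=\eta_P$. An object $M$ is total if $M=\mathsf{L}M$ and $\eta_M=\mathrm{id}_M$. A local functor $F:\mathbb{C}\to\mathbb{C}'$ is a functor with $F\mathsf{L}M=\mathsf{L}'FM$, $F\eta_M=\eta'_{FM}$ for all $M$, which preserves each pullback of $\eta_N$ along every morphism $f:M\to\mathsf{L}N$. A local natural transformation between local functors is just a natural transformation; it is total if for every $M$ the naturality square of $\eta_M$ (with sides $\varphi_M$, $F\eta_M$, $G\eta_M$, $\varphi_{\mathsf{L}M}$) is a pullback. $\mathbf{LCat}_{\mathsf{lax}}$ is the 2-category of local categories, local functors, local natural transformations; $\mathbf{LCat}$ its 2-subcategory with total natural transformations as 2-cells. The 2-functor $\mathbf{L}$. For a restriction category $\mathbb{X}$, $\mathbf{L}[\mathbb{X}]$ has objects pairs $(A,a)$ with $a=\bar a:A\to A$ a restriction idempotent; morphisms $f:(A,a)\to(B,b)$ are morphisms $f:A\to B$ of $\mathbb{X}$ with $\bar f=a$ and $fb=f$; identity on $(A,a)$ is $a$; composition as in $\mathbb{X}$; local structure $\mathsf{L}(A,a)=(A,\mathrm{id}_A)$, $\eta_{(A,a)}=a$. For a restriction functor $F$, $\mathbf{L}[F](A,a)=(FA,Fa)$, $\mathbf{L}[F]f=Ff$; for a restriction natural transformation $\varphi$, $\mathbf{L}[\varphi]_{(A,a)}=(Fa)\varphi_A$. The 2-functor $\mathbf{R}$. For a local category $\mathbb{C}$,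 $\mathbf{R}[\mathbb{C}]$ has as objects the total objects of $\mathbb{C}$; a morphism $M\to N$ is an isomorphism class of pairs $(U,f)$ with $\mathsf{L}U=M$ and $f:U\to N$, where $(U,f)\cong(V,g)$ if there is an isomorphism $\varphi:U\to V$ with $\varphi\eta_V=\eta_U$ and $\varphi g=f$; identity on $M$ is $(M,\mathrm{id}_M)$; the composite of $(U,f):M\to N$ and $(V,g):N\to P$ is $(W,\pi_Vg)$ where $W$ with $\pi_V:W\to V$ is a pullback of $\eta_V$ along $f$; the restriction of $(U,f)$ is $(U,\eta_U)$. For a local functor $F$, $\mathbf{R}[F]M=FM$, $\mathbf{R}[F](U,f)=(FU,Ff)$; for a local natural transformation $\varphi$, $\mathbf{R}[\varphi]_M=(FM,\varphi_M)$. *)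

(* Defs.v *)
From Stdlib Require Import ProofIrrelevance IndefiniteDescription JMeq.

Record Cat : Type := mkCat {
  ob :> Type;
  hom : ob -> ob -> Type;
  idm : forall A, hom A A;
  cmp : forall A B C, hom A B -> hom B C -> hom A C }.
Arguments hom {_} _ _.
Arguments idm {_} _.
Arguments cmp {_ _ _ _} _ _.
Notation "f ;; g" := (cmp f g) (at level 40, left associativity).

Record isCat (C : Cat) : Prop := {
  cat_idl : forall (A B : C) (f : hom A B), idm A ;; f = f;
  cat_idr : forall (A B : C) (f : hom A B), f ;; idm B = f;
  cat_assoc : forall (A B C' D : C) (f : hom A B) (g : hom B C') (h : hom C' D),
      (f ;; g) ;; h = f ;; (g ;; h) }.

Definition tr {C : Cat} {A X Y : C} (e : X = Y) (h : hom A X) : hom A Y :=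
  eq_rect X (fun Z => hom A Z) h Y e.

Definition monic {C : Cat} {A B : C} (m : hom A B) : Prop :=
  forall (Z : C) (g h : hom Z A), g ;; m = h ;; m -> g = h.

Definition is_pullback {C : Cat} {P A B D : C}
  (p1 : hom P A) (p2 : hom P B) (f : hom A D) (g : hom B D) : Prop :=
  p1 ;; f = p2 ;; g /\
  forall (Q : C) (q1 : hom Q A) (q2 : hom Q B), q1 ;; f = q2 ;; g ->
    exists! u : hom Q P, u ;; p1 = q1 /\ u ;; p2 = q2.

Record RData : Type := mkRData {
  rcat :> Cat;
  rst : forall (A B : rcat), hom A B -> hom A A }.
Arguments rst {_ _ _} _.

Record isRC (X : RData) : Prop := {
  rc_cat : isCat X;
  R1 : forall (A B : X) (f : hom A B), rst f ;; f = f;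
  R2 : forall (A B C : X) (f : hom A B) (g : hom A C), rst f ;; rst g = rst g ;; rst f;
  R3 : forall (A B C : X) (f : hom A B) (g : hom A C), rst g ;; rst f = rst (rst g ;; f);
  R4 : forall (A B C : X) (f : hom A B) (g : hom B C), f ;; rst g = rst (f ;; g) ;; f }.

Definition rtotal {X : RData} {A B : X} (f : hom A B) : Prop := rst f = idm A.

Record LData : Type := mkLData {
  lcat :> Cat;
  Lo : lcat -> lcat;
  eta : forall M : lcat, hom M (Lo M) }.
Arguments Lo {_} _.
Arguments eta {_} _.

Record isLC (C : LData) : Prop := {
  lc_cat : isCat C;
  L1a : forall M : C, Lo (Lo M) = Lo M;
  L1b : forall M : C, tr (L1a M) (eta (Lo M)) = idm (Lo M);
  L2 : forall M : C, monic (eta M);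
  L3 : forall (M N : C) (f : hom N (Lo M)),
      exists (P : C) (m : hom P N) (k : hom P M) (e : Lo P = Lo N),
        is_pullback m k f (eta M) /\ m ;; eta N = tr e (eta P) }.

Record FData (C D : Cat) : Type := mkF {
  fo :> C -> D;
  fm : forall A B : C, hom A B -> hom (fo A) (fo B) }.
Arguments mkF {_ _} _ _.
Arguments fo {_ _} _ _.
Arguments fm {_ _} _ {_ _} _.

Record isFunctor {C D : Cat} (F : FData C D) : Prop := {
  f_id : forall A : C, fm F (idm A) = idm (F A);
  f_cmp : forall (A B E : C) (f : hom A B) (g : hom B E), fm F (f ;; g) = fm F f ;; fm F g }.

Definition isRFunctor {X Y : RData} (F : FData X Y) : Prop :=
  isFunctor F /\ forall (A B : X) (f : hom A B), fm F (rst f) = rst (fm F f).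

Record isLFunctor {C D : LData} (F : FData C D) : Prop := {
  lf_fun : isFunctor F;
  lf_obj : forall M : C, F (Lo M) = Lo (F M);
  lf_eta : forall M : C, tr (lf_obj M) (fm F (eta M)) = eta (F M);
  lf_pb : forall (M N P : C) (f : hom M (Lo N)) (p1 : hom P M) (p2 : hom P N),
      is_pullback p1 p2 f (eta N) ->
      is_pullback (fm F p1) (fm F p2) (fm F f) (fm F (eta N)) }.

Definition NT {C D : Cat} (F G : FData C D) : Type := forall A : C, hom (F A) (G A).

Definition isNat {C D : Cat} {F G : FData C D} (a : NT F G) : Prop :=
  forall (A B : C) (f : hom A B), fm F f ;; a B = a A ;; fm G f.

(* 2-cells of RCat_lax *)
Definition isRNT {X Y : RData} {F G : FData X Y} (a : NT F G) : Prop :=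
  (forall A : X, rtotal (a A)) /\
  forall (A B : X) (f : hom A B), fm F f ;; a B = fm F (rst f) ;; a A ;; fm G f.
(* 2-cells of RCat: total natural transformations *)
Definition isRTotNT {X Y : RData} {F G : FData X Y} (a : NT F G) : Prop :=
  isRNT a /\ isNat a.
(* 2-cells of LCat_lax *)
Definition isLNT {C D : LData} {F G : FData C D} (a : NT F G) : Prop := isNat a.
(* 2-cells of LCat: total local natural transformations *)
Definition isLTotNT {C D : LData} {F G : FData C D} (a : NT F G) : Prop :=
  isNat a /\
  forall M : C, is_pullback (a M) (fm F (eta M)) (fm G (eta M)) (a (Lo M)).

Definition fid (C : Cat) : FData C C := mkF (fun x => x) (fun x y f => f).
Definition fcomp {A B C : Cat} (F : FData A B) (G : FData B C) : FData A C :=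
  mkF (fun x => G (F x)) (fun x y f => fm G (fm F f)).
Definition ntid {C D : Cat} (F : FData C D) : NT F F := fun A => idm (F A).
Definition vcomp {C D : Cat} {F G H : FData C D} (a : NT F G) (b : NT G H) : NT F H :=
  fun A => a A ;; b A.
Definition whiskL {A B C : Cat} (K : FData A B) {F G : FData B C} (a : NT F G)
  : NT (fcomp K F) (fcomp K G) := fun x => a (K x).
Definition whiskR {A B C : Cat} {F G : FData A B} (a : NT F G) (K : FData B C)
  : NT (fcomp F K) (fcomp G K) := fun x => fm K (a x).

(* equality of functors / of natural transformations (between possibly
   only propositionally equal functors) *)
Definition feq {C D : Cat} (F G : FData C D) : Prop :=
  (forall A : C, F A = G A) /\
  forall (A B : C) (f : hom A B), JMeq (fm F f) (fm G f).
Definition nteq {C D : Cat} {F G F' G' : FData C D} (a : NT F G) (b : NT F' G') : Prop :=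
  forall A : C, JMeq (a A) (b A).

(* equivalences (internal to the 2-categories), parametrised by the
   class of admissible 2-cells *)
Definition rc_equiv
  (P2 : forall (A B : RData) (F G : FData A B), NT F G -> Prop)
  {X Y : RData} (F : FData X Y) : Prop :=
  exists G : FData Y X, isRFunctor G /\
  exists (u : NT (fid X) (fcomp F G)) (u' : NT (fcomp F G) (fid X))
         (v : NT (fid Y) (fcomp G F)) (v' : NT (fcomp G F) (fid Y)),
    P2 X X _ _ u /\ P2 X X _ _ u' /\ P2 Y Y _ _ v /\ P2 Y Y _ _ v' /\
    vcomp u u' = ntid (fid X) /\ vcomp u' u = ntid (fcomp F G) /\
    vcomp v v' = ntid (fid Y) /\ vcomp v' v = ntid (fcomp G F).

Definition lc_equiv
  (P2 : forall (A B : LData) (F G : FData A B), NT F G -> Prop)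
  {C D : LData} (F : FData C D) : Prop :=
  exists G : FData D C, isLFunctor G /\
  exists (u : NT (fid C) (fcomp F G)) (u' : NT (fcomp F G) (fid C))
         (v : NT (fid D) (fcomp G F)) (v' : NT (fcomp G F) (fid D)),
    P2 C C _ _ u /\ P2 C C _ _ u' /\ P2 D D _ _ v /\ P2 D D _ _ v' /\
    vcomp u u' = ntid (fid C) /\ vcomp u' u = ntid (fcomp F G) /\
    vcomp v v' = ntid (fid D) /\ vcomp v' v = ntid (fcomp G F).

Lemma rst_id {X : RData} (HX : isRC X) (A : X) : rst (idm A) = idm A.
Proof.
  transitivity (rst (idm A) ;; idm A).
  - symmetry; apply (cat_idr _ (rc_cat _ HX)).
  - apply (R1 _ HX).
Qed.

Lemma ridem {X : RData} (HX : isRC X) {A : X} (a : hom A A) : rst a = a -> a ;; a = a.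
Proof. intros H. rewrite <- H at 1. apply (R1 _ HX). Qed.

Lemma rst_cmp_rst {X : RData} (HX : isRC X) {A B C : X} (f : hom A B) (g : hom B C) :
  rst (f ;; rst g) = rst (f ;; g).
Proof.
  rewrite (R4 _ HX _ _ _ f g).
  rewrite <- (R3 _ HX _ _ _ f (f ;; g)).
  rewrite (R2 _ HX _ _ _ (f ;; g) f).
  rewrite (R3 _ HX _ _ _ (f ;; g) f).
  rewrite <- (cat_assoc _ (rc_cat _ HX)).
  rewrite (R1 _ HX). reflexivity.
Qed.

Record LObj (X : RData) : Type := mkLObj {
  lo_ob : X; lo_id : hom lo_ob lo_ob; lo_ok : rst lo_id = lo_id }.
Arguments mkLObj {_} _ _ _.
Arguments lo_ob {_} _.
Arguments lo_id {_} _.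
Arguments lo_ok {_} _.

Record LHom (X : RData) (x y : LObj X) : Type := mkLHom {
  lh : hom (lo_ob x) (lo_ob y);
  lh_r : rst lh = lo_id x;
  lh_c : lh ;; lo_id y = lh }.
Arguments mkLHom {_ _ _} _ _ _.
Arguments lh {_ _ _} _.
Arguments lh_r {_ _ _} _.
Arguments lh_c {_ _ _} _.

Definition LD_idm {X : RData} (HX : isRC X) (x : LObj X) : LHom X x x :=
  mkLHom (lo_id x) (lo_ok x) (ridem HX (lo_id x) (lo_ok x)).

Lemma LD_cmp_r {X : RData} (HX : isRC X) {x y z : LObj X} (f : LHom X x y) (g : LHom X y z) :
  rst (lh f ;; lh g) = lo_id x.
Proof.
  rewrite <- (rst_cmp_rst HX). rewrite (lh_r g). rewrite (lh_c f). exact (lh_r f).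
Qed.

Lemma LD_cmp_c {X : RData} (HX : isRC X) {x y z : LObj X} (f : LHom X x y) (g : LHom X y z) :
  (lh f ;; lh g) ;; lo_id z = lh f ;; lh g.
Proof. rewrite (cat_assoc _ (rc_cat _ HX)). rewrite (lh_c g). reflexivity. Qed.

Definition LD_cmp {X : RData} (HX : isRC X) {x y z : LObj X} (f : LHom X x y) (g : LHom X y z)
  : LHom X x z := mkLHom (lh f ;; lh g) (LD_cmp_r HX f g) (LD_cmp_c HX f g).

Definition LCat (X : RData) (HX : isRC X) : Cat :=
  mkCat (LObj X) (LHom X) (LD_idm HX) (fun x y z f g => LD_cmp HX f g).

Definition Lo_L {X : RData} (HX : isRC X) (x : LObj X) : LObj X :=
  mkLObj (lo_ob x) (idm (lo_ob x)) (rst_id HX (lo_ob x)).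

Definition eta_L {X : RData} (HX : isRC X) (x : LObj X) : LHom X x (Lo_L HX x) :=
  mkLHom (y := Lo_L HX x) (lo_id x) (lo_ok x) (cat_idr _ (rc_cat _ HX) _ _ (lo_id x)).

Definition LD (X : RData) (HX : isRC X) : LData :=
  mkLData (LCat X HX) (Lo_L HX) (eta_L HX).

Definition LF_ob {X Y : RData} {F : FData X Y} (HF : isRFunctor F) (x : LObj X) : LObj Y :=
  mkLObj (F (lo_ob x)) (fm F (lo_id x))
    (eq_trans (eq_sym (proj2 HF _ _ (lo_id x))) (f_equal (fm F) (lo_ok x))).

Definition LF_hom {X Y : RData} {F : FData X Y} (HF : isRFunctor F) {x y : LObj X}
  (f : LHom X x y) : LHom Y (LF_ob HF x) (LF_ob HF y) :=
  mkLHom (x := LF_ob HF x) (y := LF_ob HF y) (fm F (lh f))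
    (eq_trans (eq_sym (proj2 HF _ _ (lh f))) (f_equal (fm F) (lh_r f)))
    (eq_trans (eq_sym (f_cmp _ (proj1 HF) _ _ _ (lh f) (lo_id y))) (f_equal (fm F) (lh_c f))).

Definition LF {X Y : RData} (HX : isRC X) (HY : isRC Y) {F : FData X Y} (HF : isRFunctor F)
  : FData (LD X HX) (LD Y HY) :=
  mkF (C := LD X HX) (D := LD Y HY) (LF_ob HF) (fun x y f => LF_hom HF f).

Lemma LN_r {X Y : RData} (HY : isRC Y) {F G : FData X Y} (HF : isRFunctor F)
  {a : NT F G} (Ha : isRNT a) (x : LObj X) :
  rst (fm F (lo_id x) ;; a (lo_ob x)) = fm F (lo_id x).
Proof.
  rewrite <- (rst_cmp_rst HY). rewrite (proj1 Ha (lo_ob x)).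
  rewrite (cat_idr _ (rc_cat _ HY)). rewrite <- (proj2 HF). rewrite (lo_ok x). reflexivity.
Qed.

Lemma LN_c {X Y : RData} {F G : FData X Y} {a : NT F G} (Ha : isRNT a) (x : LObj X) :
  (fm F (lo_id x) ;; a (lo_ob x)) ;; fm G (lo_id x) = fm F (lo_id x) ;; a (lo_ob x).
Proof.
  pose proof (proj2 Ha _ _ (lo_id x)) as E. rewrite (lo_ok x) in E. symmetry; exact E.
Qed.

Definition LN {X Y : RData} (HX : isRC X) (HY : isRC Y) {F G : FData X Y}
  (HF : isRFunctor F) (HG : isRFunctor G) {a : NT F G} (Ha : isRNT a)
  : NT (LF HX HY HF) (LF HX HY HG) :=
  fun x => mkLHom (x := LF_ob HF x) (y := LF_ob HG x)
             (fm F (lo_id x) ;; a (lo_ob x)) (LN_r HY HF Ha x) (LN_c Ha x).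

Record TObj (C : LData) : Type := mkTObj {
  to_ob : C; to_eq : Lo to_ob = to_ob; to_eta : tr to_eq (eta to_ob) = idm to_ob }.
Arguments mkTObj {_} _ _ _.
Arguments to_ob {_} _.
Arguments to_eq {_} _.
Arguments to_eta {_} _.

Record Span (C : LData) (M N : C) : Type := mkSpan {
  sp_ob : C; sp_eq : Lo sp_ob = M; sp_mor : hom sp_ob N }.
Arguments mkSpan {_ _ _} _ _ _.
Arguments sp_ob {_ _ _} _.
Arguments sp_eq {_ _ _} _.
Arguments sp_mor {_ _ _} _.

Definition sp_iso {C : LData} {M N : C} (p q : Span C M N) : Prop :=
  exists (u : hom (sp_ob p) (sp_ob q)) (v : hom (sp_ob q) (sp_ob p)),
    u ;; v = idm _ /\ v ;; u = idm _ /\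
    u ;; eta (sp_ob q) = tr (eq_trans (sp_eq p) (eq_sym (sp_eq q))) (eta (sp_ob p)) /\
    u ;; sp_mor q = sp_mor p.

(* morphisms of R[C]: isomorphism classes of pairs *)
Definition RHom {C : LData} (M N : C) : Type :=
  { P : Span C M N -> Prop | exists p, P = sp_iso p }.

Definition cls {C : LData} {M N : C} (p : Span C M N) : RHom M N :=
  exist _ (sp_iso p) (ex_intro _ p eq_refl).

Definition rep {C : LData} {M N : C} (x : RHom M N) : Span C M N :=
  proj1_sig (constructive_indefinite_description _ (proj2_sig x)).

Definition pbc {C : LData} (HC : isLC C) (M N : C) (f : hom N (Lo M)) :
  { P : C & { m : hom P N & { k : hom P M & { e : Lo P = Lo N |
     is_pullback m k f (eta M) /\ m ;; eta N = tr e (eta P) } } } }.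
Proof.
  pose proof (L3 _ HC M N f) as H.
  apply constructive_indefinite_description in H. destruct H as [P H]. exists P.
  apply constructive_indefinite_description in H. destruct H as [m H]. exists m.
  apply constructive_indefinite_description in H. destruct H as [k H]. exists k.
  apply constructive_indefinite_description in H. destruct H as [e H]. exists e.
  exact H.
Defined.

Definition Ridm {C : LData} (M : TObj C) : RHom (to_ob M) (to_ob M) :=
  cls (mkSpan (to_ob M) (to_eq M) (idm (to_ob M))).

(* (U,f);(V,g) = (W, pi_V g), W a pullback of eta_V along f *)
Definition Rcmp {C : LData} (HC : isLC C) {M N P : C} (x : RHom M N) (y : RHom N P)
  : RHom M P :=
  let p := rep x in
  let q := rep y in
  let pb := pbc HC (sp_ob q) (sp_ob p) (tr (eq_sym (sp_eq q)) (sp_mor p)) in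
  cls (mkSpan (projT1 pb)
          (eq_trans (proj1_sig (projT2 (projT2 (projT2 pb)))) (sp_eq p))
          (projT1 (projT2 (projT2 pb)) ;; sp_mor q)).

Definition Rrst {C : LData} {M N : C} (x : RHom M N) : RHom M M :=
  let p := rep x in cls (mkSpan (sp_ob p) (sp_eq p) (tr (sp_eq p) (eta (sp_ob p)))).

Definition RCat (C : LData) (HC : isLC C) : Cat :=
  mkCat (TObj C) (fun M N => RHom (to_ob M) (to_ob N)) Ridm
        (fun M N P x y => Rcmp HC x y).

Definition RD (C : LData) (HC : isLC C) : RData :=
  mkRData (RCat C HC) (fun M N x => Rrst x).

Lemma fm_tr {C D : Cat} (F : FData C D) {A X Y : C} (e : X = Y) (h : hom A X) :
  fm F (tr e h) = tr (f_equal (fo F) e) (fm F h).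
Proof. destruct e. reflexivity. Qed.

Lemma tr_tr {C : Cat} {A X Y Z : C} (e1 : X = Y) (e2 : Y = Z) (h : hom A X) :
  tr e2 (tr e1 h) = tr (eq_trans e1 e2) h.
Proof. destruct e2. reflexivity. Qed.

Definition RF_eq {C D : LData} {F : FData C D} (HF : isLFunctor F) (M : TObj C) :
  Lo (F (to_ob M)) = F (to_ob M) :=
  eq_trans (eq_sym (lf_obj _ HF (to_ob M))) (f_equal (fo F) (to_eq M)).

Lemma RF_eta {C D : LData} {F : FData C D} (HF : isLFunctor F) (M : TObj C) :
  tr (RF_eq HF M) (eta (F (to_ob M))) = idm (F (to_ob M)).
Proof.
  rewrite <- (lf_eta _ HF). rewrite tr_tr.
  rewrite (proof_irrelevance _ (eq_trans (lf_obj F HF (to_ob M)) (RF_eq HF M))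
             (f_equal (fo F) (to_eq M))).
  rewrite <- fm_tr. rewrite (to_eta M). apply (f_id _ (lf_fun _ HF)).
Qed.

Definition RF_ob {C D : LData} {F : FData C D} (HF : isLFunctor F) (M : TObj C) : TObj D :=
  mkTObj (F (to_ob M)) (RF_eq HF M) (RF_eta HF M).

Definition RF_span {C D : LData} {F : FData C D} (HF : isLFunctor F) {M N : C}
  (p : Span C M N) : Span D (F M) (F N) :=
  mkSpan (F (sp_ob p)) (eq_trans (eq_sym (lf_obj _ HF (sp_ob p))) (f_equal (fo F) (sp_eq p)))
         (fm F (sp_mor p)).

Definition RF {C D : LData} (HC : isLC C) (HD : isLC D) {F : FData C D} (HF : isLFunctor F)
  : FData (RD C HC) (RD D HD) :=
  mkF (C := RD C HC) (D := RD D HD) (RF_ob HF)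
      (fun M N x => cls (RF_span HF (rep x))).

Definition RN {C D : LData} (HC : isLC C) (HD : isLC D) {F G : FData C D}
  (HF : isLFunctor F) (HG : isLFunctor G) (a : NT F G) : NT (RF HC HD HF) (RF HC HD HG) :=
  fun M => cls (mkSpan (M := F (to_ob M)) (N := G (to_ob M))
                       (F (to_ob M)) (RF_eq HF M) (a (to_ob M))).

(* Main.v *)
Require Import Defs.
From Stdlib Require Import JMeq ProofIrrelevance IndefiniteDescription FunctionalExtensionality PropExtensionality Classical.


Lemma tr_cmp {C : Cat} {A B X Y : C} (e : X = Y) (f : hom A B) (g : hom B X) :
  tr e (f ;; g) = f ;; tr e g.
Proof. destruct e. reflexivity. Qed.

Lemma tr_sym_l {C : Cat} {A X Y : C} (e : X = Y) (h : hom A X) : tr (eq_sym e) (tr e h) = h.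
Proof. destruct e. reflexivity. Qed.

Lemma tr_sym_r {C : Cat} {A X Y : C} (e : X = Y) (h : hom A Y) : tr e (tr (eq_sym e) h) = h.
Proof. destruct e. reflexivity. Qed.

Lemma tr_irr {C : Cat} {A X Y : C} (e1 e2 : X = Y) (h : hom A X) : tr e1 h = tr e2 h.
Proof. rewrite (proof_irrelevance _ e1 e2). reflexivity. Qed.

Lemma tr_refl {C : Cat} {A X : C} (e : X = X) (h : hom A X) : tr e h = h.
Proof. rewrite (proof_irrelevance _ e eq_refl). reflexivity. Qed.

Lemma tr_JMeq {C : Cat} {A X Y : C} (e : X = Y) (h : hom A X) : JMeq (tr e h) h.
Proof. destruct e. reflexivity. Qed.

Lemma monic_tr {C : Cat} {A X Y : C} (e : X = Y) (m : hom A X) : monic m -> monic (tr e m).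
Proof. destruct e. auto. Qed.

Lemma pb_tr {C : Cat} {P A B D D' : C} (p1 : hom P A) (p2 : hom P B) (f : hom A D) (g : hom B D)
  (e : D = D') : is_pullback p1 p2 f g -> is_pullback p1 p2 (tr e f) (tr e g).
Proof. destruct e. auto. Qed.

Lemma pb_sym {C : Cat} {P A B D : C} (p1 : hom P A) (p2 : hom P B) (f : hom A D) (g : hom B D) :
  is_pullback p1 p2 f g -> is_pullback p2 p1 g f.
Proof.
  intros [H1 H2]. split; [auto|].
  intros Q q1 q2 Hq. destruct (H2 Q q2 q1 (eq_sym Hq)) as [u [[Hu1 Hu2] Hu]].
  exists u. split; [auto|]. intros u' [H3 H4]. apply Hu; auto.
Qed.

Definition isIso {C : Cat} {A B : C} (f : hom A B) (g : hom B A) : Prop :=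
  f ;; g = idm A /\ g ;; f = idm B.

Lemma pb_iso_transfer {C : Cat} (HC : isCat C) {P A B D A' B' : C}
  (m : hom P A) (k : hom P B) (f : hom A D) (g : hom B D)
  (a : hom A A') (a' : hom A' A) (b : hom B B') (b' : hom B' B) (f' : hom A' D) (g' : hom B' D) :
  is_pullback m k f g -> isIso a a' -> isIso b b' -> a ;; f' = f -> b ;; g' = g ->
  is_pullback (m ;; a) (k ;; b) f' g'.
Proof.
  intros [Hc Hu] [Ha1 Ha2] [Hb1 Hb2] Ef Eg.
  assert (Ef' : f' = a' ;; f).
  { rewrite <- Ef, <- (cat_assoc _ HC), Ha2, (cat_idl _ HC). reflexivity. }
  assert (Eg' : g' = b' ;; g).
  { rewrite <- Eg, <- (cat_assoc _ HC), Hb2, (cat_idl _ HC). reflexivity. }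
  split.
  - rewrite !(cat_assoc _ HC), Ef, Eg. exact Hc.
  - intros Q q1 q2 Hq.
    assert (Hq' : (q1 ;; a') ;; f = (q2 ;; b') ;; g).
    { rewrite !(cat_assoc _ HC), <- Ef', <- Eg'. exact Hq. }
    destruct (Hu Q _ _ Hq') as [u [[Hu1 Hu2] Huu]].
    exists u. split.
    + split.
      * rewrite <- (cat_assoc _ HC), Hu1, (cat_assoc _ HC), Ha2, (cat_idr _ HC). reflexivity.
      * rewrite <- (cat_assoc _ HC), Hu2, (cat_assoc _ HC), Hb2, (cat_idr _ HC). reflexivity.
    + intros u' [H1 H2]. apply Huu. split.
      * rewrite <- H1, !(cat_assoc _ HC), Ha1, (cat_idr _ HC). reflexivity.
      * rewrite <- H2, !(cat_assoc _ HC), Hb1, (cat_idr _ HC). reflexivity.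
Qed.

Lemma pb_unique_iso {C : Cat} (HC : isCat C) {P Q A B D : C}
  (p1 : hom P A) (p2 : hom P B) (q1 : hom Q A) (q2 : hom Q B) (f : hom A D) (g : hom B D) :
  is_pullback p1 p2 f g -> is_pullback q1 q2 f g ->
  exists (u : hom P Q) (v : hom Q P), isIso u v /\ u ;; q1 = p1 /\ u ;; q2 = p2.
Proof.
  intros [Hp Hpu] [Hq Hqu].
  destruct (Hqu P p1 p2 Hp) as [u [[Hu1 Hu2] _]].
  destruct (Hpu Q q1 q2 Hq) as [v [[Hv1 Hv2] _]].
  exists u, v. split; [split|split; auto].
  - destruct (Hpu P p1 p2 Hp) as [w [_ Hw]].
    transitivity w; [symmetry|]; apply Hw; split.
    + rewrite (cat_assoc _ HC), Hv1; auto.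
    + rewrite (cat_assoc _ HC), Hv2; auto.
    + apply (cat_idl _ HC).
    + apply (cat_idl _ HC).
  - destruct (Hqu Q q1 q2 Hq) as [w [_ Hw]].
    transitivity w; [symmetry|]; apply Hw; split.
    + rewrite (cat_assoc _ HC), Hu1; auto.
    + rewrite (cat_assoc _ HC), Hu2; auto.
    + apply (cat_idl _ HC).
    + apply (cat_idl _ HC).
Qed.

Lemma pb_monic {C : Cat} (HC : isCat C) {A B D : C} (h : hom A B) (g : hom B D) :
  monic g -> is_pullback (idm A) h (h ;; g) g.
Proof.
  intros Hg. split.
  - rewrite (cat_idl _ HC). reflexivity.
  - intros Q q1 q2 Hq. exists q1. split.
    + split; [apply (cat_idr _ HC)|]. apply Hg. rewrite <- Hq, (cat_assoc _ HC). reflexivity.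
    + intros u [H1 _]. rewrite <- H1. rewrite (cat_idr _ HC). reflexivity.
Qed.

Lemma pb_iso_r {C : Cat} (HC : isCat C) {A B D : C} (f : hom A D) (g : hom B D) (g' : hom D B) :
  isIso g g' -> is_pullback (idm A) (f ;; g') f g.
Proof.
  intros [H1 H2]. split.
  - rewrite (cat_idl _ HC), (cat_assoc _ HC), H2, (cat_idr _ HC). reflexivity.
  - intros Q q1 q2 Hq. exists q1. split.
    + split; [apply (cat_idr _ HC)|].
      rewrite <- (cat_assoc _ HC), Hq, (cat_assoc _ HC), H1, (cat_idr _ HC). reflexivity.
    + intros u [Hu _]. rewrite <- Hu. rewrite (cat_idr _ HC). reflexivity.
Qed.

Lemma iso_monic {C : Cat} (HC : isCat C) {A B : C} (f : hom A B) (g : hom B A) :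
  isIso f g -> monic f.
Proof.
  intros [H1 H2] Z x y Hxy.
  rewrite <- (cat_idr _ HC _ _ x), <- (cat_idr _ HC _ _ y), <- H1, <- !(cat_assoc _ HC), Hxy.
  reflexivity.
Qed.

Lemma fm_cmp2 {C D : Cat} {F : FData C D} (FF : isFunctor F) {A B E : C} (f : hom A B) (g : hom B E)
  (h : hom (F A) (F E)) : fm F (f ;; g) = h -> fm F f ;; fm F g = h.
Proof. intros <-. symmetry. apply (f_cmp _ FF). Qed.


Definition Ep {C : LData} {M N : C} (p : Span C M N) : hom (sp_ob p) M :=
  tr (sp_eq p) (eta (sp_ob p)).

Definition sp_iso' {C : LData} {M N : C} (p q : Span C M N) : Prop :=
  exists (u : hom (sp_ob p) (sp_ob q)) (v : hom (sp_ob q) (sp_ob p)),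
    isIso u v /\ u ;; Ep q = Ep p /\ u ;; sp_mor q = sp_mor p.

Lemma sp_iso_iff {C : LData} {M N : C} (p q : Span C M N) : sp_iso p q <-> sp_iso' p q.
Proof.
  unfold sp_iso, sp_iso', Ep, isIso. split.
  - intros [u [v [H1 [H2 [H3 H4]]]]]. exists u, v. repeat split; auto.
    rewrite <- tr_cmp, H3, <- tr_tr. apply tr_sym_r.
  - intros [u [v [[H1 H2] [H3 H4]]]]. exists u, v. repeat split; auto.
    rewrite <- tr_tr. rewrite <- H3, tr_cmp. rewrite tr_sym_l. reflexivity.
Qed.

Lemma sp_iso'_refl {C : LData} (HC : isLC C) {M N : C} (p : Span C M N) : sp_iso' p p.
Proof.
  exists (idm _), (idm _). repeat split; apply (cat_idl _ (lc_cat _ HC)).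
Qed.

Lemma sp_iso'_sym {C : LData} (HC : isLC C) {M N : C} (p q : Span C M N) :
  sp_iso' p q -> sp_iso' q p.
Proof.
  pose proof (lc_cat _ HC) as K.
  intros [u [v [[H1 H2] [H3 H4]]]]. exists v, u. repeat split; auto.
  - rewrite <- H3, <- (cat_assoc _ K), H2, (cat_idl _ K). reflexivity.
  - rewrite <- H4, <- (cat_assoc _ K), H2, (cat_idl _ K). reflexivity.
Qed.

Lemma sp_iso'_trans {C : LData} (HC : isLC C) {M N : C} (p q r : Span C M N) :
  sp_iso' p q -> sp_iso' q r -> sp_iso' p r.
Proof.
  pose proof (lc_cat _ HC) as K.
  intros [u [v [[H1 H2] [H3 H4]]]] [u' [v' [[H1' H2'] [H3' H4']]]].
  exists (u ;; u'), (v' ;; v). repeat split.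
  - rewrite (cat_assoc _ K), <- (cat_assoc _ K _ _ _ _ u'), H1', (cat_idl _ K). auto.
  - rewrite (cat_assoc _ K), <- (cat_assoc _ K _ _ _ _ v), H2, (cat_idl _ K). auto.
  - rewrite (cat_assoc _ K), H3'. auto.
  - rewrite (cat_assoc _ K), H4'. auto.
Qed.

Lemma sp_iso_fun {C : LData} (HC : isLC C) {M N : C} (p q : Span C M N) :
  sp_iso' p q -> sp_iso p = sp_iso q.
Proof.
  intros H. apply functional_extensionality. intros r. apply propositional_extensionality.
  rewrite !sp_iso_iff. split; intros H'.
  - apply (sp_iso'_trans HC _ p); auto. apply sp_iso'_sym; auto.
  - apply (sp_iso'_trans HC _ q); auto.
Qed.

Lemma cls_eq {C : LData} (HC : isLC C) {M N : C} (p q : Span C M N) :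
  sp_iso' p q -> cls p = cls q.
Proof.
  intros H. pose proof (sp_iso_fun HC p q H) as E. unfold cls.
  generalize (ex_intro (fun p0 : Span C M N => sp_iso q = sp_iso p0) q eq_refl).
  generalize (ex_intro (fun p0 : Span C M N => sp_iso p = sp_iso p0) p eq_refl).
  rewrite E. intros. f_equal. apply proof_irrelevance.
Qed.

Lemma cls_inj {C : LData} (HC : isLC C) {M N : C} (p q : Span C M N) :
  cls p = cls q -> sp_iso' p q.
Proof.
  intros H. apply (f_equal (@proj1_sig _ _)) in H. simpl in H.
  apply sp_iso_iff. rewrite H. apply sp_iso_iff, sp_iso'_refl; auto.
Qed.

Lemma rep_cls {C : LData} (HC : isLC C) {M N : C} (p : Span C M N) :
  sp_iso' p (rep (cls p)).
Proof.
  unfold rep. destruct (constructive_indefinite_description _ (proj2_sig (cls p))) as [X Hq].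
  simpl in *. apply sp_iso_iff. rewrite Hq. apply sp_iso_iff, sp_iso'_refl; auto.
Qed.

Lemma cls_rep {C : LData} {M N : C} (x : RHom M N) : cls (rep x) = x.
Proof.
  unfold rep. destruct (constructive_indefinite_description _ (proj2_sig x)) as [X Hq].
  simpl. destruct x as [P HP]. simpl in *. subst P. unfold cls. f_equal. apply proof_irrelevance.
Qed.

Lemma Ep_monic {C : LData} (HC : isLC C) {M N : C} (p : Span C M N) : monic (Ep p).
Proof. apply monic_tr. apply (L2 _ HC). Qed.

Lemma Ep_mk {C : LData} {M N : C} (U : C) (e : Lo U = M) (f : hom U N) :
  Ep (mkSpan U e f) = tr e (eta U).
Proof. reflexivity. Qed.

Lemma span_ext {C : LData} {M N : C} (U : C) (e e' : Lo U = M) (f f' : hom U N) :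
  f = f' -> mkSpan U e f = mkSpan U e' f'.
Proof. intros ->. rewrite (proof_irrelevance _ e e'). reflexivity. Qed.

Lemma pb_span_exists {C : LData} (HC : isLC C) {M N P : C} (p : Span C M N) (q : Span C N P) :
  exists (W : C) (eW : Lo W = M) (m : hom W (sp_ob p)) (k : hom W (sp_ob q)),
    is_pullback m k (sp_mor p) (Ep q) /\ m ;; Ep p = tr eW (eta W).
Proof.
  destruct (L3 _ HC (sp_ob q) (sp_ob p) (tr (eq_sym (sp_eq q)) (sp_mor p)))
    as [W [m [k [e [Hpb Hm]]]]].
  exists W, (eq_trans e (sp_eq p)), m, k. split.
  - apply (pb_tr _ _ _ _ (sp_eq q)) in Hpb. rewrite tr_sym_r in Hpb. exact Hpb.
  - unfold Ep. rewrite <- tr_tr, <- Hm, tr_cmp. reflexivity.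
Qed.

Lemma Rcmp_char {C : LData} (HC : isLC C) {M N P : C} (p : Span C M N) (q : Span C N P)
  (W : C) (eW : Lo W = M) (m : hom W (sp_ob p)) (k : hom W (sp_ob q)) :
  is_pullback m k (sp_mor p) (Ep q) -> m ;; Ep p = tr eW (eta W) ->
  Rcmp HC (cls p) (cls q) = cls (mkSpan W eW (k ;; sp_mor q)).
Proof.
  pose proof (lc_cat _ HC) as K.
  intros Hpb Hm. unfold Rcmp. cbv zeta.
  destruct (rep_cls HC p) as [a [a' [Ha [Ha1 Ha2]]]].
  destruct (rep_cls HC q) as [b [b' [Hb [Hb1 Hb2]]]].
  revert a a' Ha Ha1 Ha2 b b' Hb Hb1 Hb2.
  generalize (rep (cls p)) as p'. generalize (rep (cls q)) as q'. intros q' p'.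
  intros a a' Ha Ha1 Ha2 b b' Hb Hb1 Hb2.
  destruct (pbc HC (sp_ob q') (sp_ob p') (tr (eq_sym (sp_eq q')) (sp_mor p')))
    as [W' [m' [k' [e [Hpb' Hm']]]]]. simpl.
  apply (pb_tr _ _ _ _ (sp_eq q')) in Hpb'. rewrite tr_sym_r in Hpb'.
  pose proof (pb_iso_transfer K m k _ _ a a' b b' _ _ Hpb Ha Hb Ha2 Hb1) as Hpb2.
  destruct (pb_unique_iso K _ _ _ _ _ _ Hpb2 Hpb') as [u [v [Huv [Hu1 Hu2]]]].
  symmetry. apply cls_eq; auto.
  exists u, v. split; auto. simpl. split.
  - unfold Ep at 1 2; simpl. rewrite <- tr_tr, <- Hm', tr_cmp. fold (Ep p').
    rewrite <- (cat_assoc _ K), Hu1, (cat_assoc _ K), Ha1. exact Hm.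
  - rewrite <- (cat_assoc _ K), Hu2, (cat_assoc _ K), Hb2. reflexivity.
Qed.


Lemma pb_paste {C : Cat} (HC : isCat C) {U V T D N2 W1 W2 W3 : C}
  (f : hom U D) (e : hom V D) (g : hom V N2) (h : hom T N2)
  (m1 : hom W1 U) (k1 : hom W1 V) (m3 : hom W3 V) (k3 : hom W3 T)
  (m2 : hom W2 W1) (k2 : hom W2 T) (u : hom W2 W3) :
  is_pullback m1 k1 f e -> is_pullback m3 k3 g h -> is_pullback m2 k2 (k1 ;; g) h ->
  u ;; m3 = m2 ;; k1 -> u ;; k3 = k2 ->
  is_pullback (m2 ;; m1) u f (m3 ;; e).
Proof.
  intros [C1 P1] [C3 P3] [C2 P2] Hu1 Hu2. split.
  - rewrite (cat_assoc _ HC), C1, <- (cat_assoc _ HC), <- Hu1, (cat_assoc _ HC). reflexivity.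
  - intros Q q1 q2 Hq.
    assert (E1 : q1 ;; f = (q2 ;; m3) ;; e) by (rewrite (cat_assoc _ HC); exact Hq).
    destruct (P1 Q _ _ E1) as [w1 [[Hw1a Hw1b] Hw1u]].
    assert (E2 : w1 ;; (k1 ;; g) = (q2 ;; k3) ;; h).
    { rewrite <- (cat_assoc _ HC), Hw1b, !(cat_assoc _ HC), C3. reflexivity. }
    destruct (P2 Q _ _ E2) as [w2 [[Hw2a Hw2b] Hw2u]].
    assert (Hw2c : w2 ;; u = q2).
    { assert (E3 : (q2 ;; m3) ;; g = (q2 ;; k3) ;; h)
        by (rewrite !(cat_assoc _ HC), C3; reflexivity).
      destruct (P3 Q _ _ E3) as [w3 [_ Hw3u]].
      transitivity w3; [symmetry|]; apply Hw3u; split; auto.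
      - rewrite (cat_assoc _ HC), Hu1, <- (cat_assoc _ HC), Hw2a. exact Hw1b.
      - rewrite (cat_assoc _ HC), Hu2. exact Hw2b. }
    exists w2. split.
    + split; auto. rewrite <- (cat_assoc _ HC), Hw2a. exact Hw1a.
    + intros w' [H1 H2]. apply Hw2u. split.
      * symmetry. apply Hw1u. split.
        -- rewrite (cat_assoc _ HC). exact H1.
        -- rewrite (cat_assoc _ HC), <- Hu1, <- (cat_assoc _ HC), H2. reflexivity.
      * rewrite <- Hu2, <- (cat_assoc _ HC), H2. reflexivity.
Qed.

Lemma pb_id_l {C : Cat} (HC : isCat C) {B D : C} (g : hom B D) :
  is_pullback g (idm B) (idm D) g.
Proof.
  split.
  - rewrite (cat_idr _ HC), (cat_idl _ HC). reflexivity.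
  - intros Q q1 q2 Hq. exists q2. split.
    + split; [|apply (cat_idr _ HC)]. rewrite <- Hq, (cat_idr _ HC). reflexivity.
    + intros u [_ Hu]. rewrite <- Hu, (cat_idr _ HC). reflexivity.
Qed.

Lemma Rrst_cls {C : LData} (HC : isLC C) {M N : C} (p : Span C M N) :
  Rrst (cls p) = cls (mkSpan (sp_ob p) (sp_eq p) (Ep p)).
Proof.
  unfold Rrst; cbv zeta. apply cls_eq; auto.
  destruct (sp_iso'_sym HC _ _ (rep_cls HC p)) as [u [v [Huv [H1 H2]]]].
  exists u, v. split; auto.
Qed.

Lemma Ep_Ridm {C : LData} (M : TObj C) :
  Ep (mkSpan (to_ob M) (to_eq M) (idm (to_ob M))) = idm (to_ob M).
Proof. apply (to_eta M). Qed.

Lemma Rid_l {C : LData} (HC : isLC C) (M : TObj C) {N : C} (q : Span C (to_ob M) N) :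
  Rcmp HC (Ridm M) (cls q) = cls q.
Proof.
  pose proof (lc_cat _ HC) as K. unfold Ridm.
  rewrite (Rcmp_char HC (mkSpan (to_ob M) (to_eq M) (idm _)) q (sp_ob q) (sp_eq q) (Ep q) (idm _)).
  - rewrite (cat_idl _ K). destruct q. reflexivity.
  - simpl. apply pb_id_l; auto.
  - rewrite Ep_Ridm, (cat_idr _ K). reflexivity.
Qed.

Lemma Rid_r {C : LData} (HC : isLC C) {M : C} (N : TObj C) (p : Span C M (to_ob N)) :
  Rcmp HC (cls p) (Ridm N) = cls p.
Proof.
  pose proof (lc_cat _ HC) as K. unfold Ridm.
  rewrite (Rcmp_char HC p (mkSpan (to_ob N) (to_eq N) (idm _)) (sp_ob p) (sp_eq p) (idm _) (sp_mor p ;; idm _)).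
  - rewrite !(cat_idr _ K). destruct p. reflexivity.
  - rewrite Ep_Ridm. simpl. apply pb_iso_r; auto. split; apply (cat_idl _ K).
  - rewrite (cat_idl _ K). reflexivity.
Qed.

Lemma Rassoc {C : LData} (HC : isLC C) {M N P Q : C} (p : Span C M N) (q : Span C N P)
  (r : Span C P Q) :
  Rcmp HC (Rcmp HC (cls p) (cls q)) (cls r) = Rcmp HC (cls p) (Rcmp HC (cls q) (cls r)).
Proof.
  pose proof (lc_cat _ HC) as K.
  destruct (pb_span_exists HC p q) as [W1 [e1 [m1 [k1 [H1 H1']]]]].
  rewrite (Rcmp_char HC p q W1 e1 m1 k1 H1 H1').
  set (s1 := mkSpan W1 e1 (k1 ;; sp_mor q)).
  destruct (pb_span_exists HC s1 r) as [W2 [e2 [m2 [k2 [H2 H2']]]]].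
  rewrite (Rcmp_char HC s1 r W2 e2 m2 k2 H2 H2').
  destruct (pb_span_exists HC q r) as [W3 [e3 [m3 [k3 [H3 H3']]]]].
  rewrite (Rcmp_char HC q r W3 e3 m3 k3 H3 H3').
  set (s3 := mkSpan W3 e3 (k3 ;; sp_mor r)).
  assert (Hc : (m2 ;; k1) ;; sp_mor q = k2 ;; Ep r).
  { rewrite (cat_assoc _ K). apply H2. }
  destruct (proj2 H3 _ _ _ Hc) as [u [[Hu1 Hu2] _]].
  rewrite (Rcmp_char HC p s3 W2 e2 (m2 ;; m1) u).
  - apply f_equal. apply span_ext. simpl. rewrite <- (cat_assoc _ K), Hu2. reflexivity.
  - simpl. unfold s3. rewrite Ep_mk, <- H3'.
    apply (pb_paste K (sp_mor p) (Ep q) (sp_mor q) (Ep r) m1 k1 m3 k3 m2 k2 u); auto.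
  - rewrite (cat_assoc _ K). unfold s1 in H2'. rewrite Ep_mk in H2'. rewrite <- H1' in H2'. exact H2'.
Qed.

Lemma RD_isCat {C : LData} (HC : isLC C) : isCat (RD C HC).
Proof.
  split.
  - intros A B f. simpl. rewrite <- (cls_rep f). apply Rid_l.
  - intros A B f. simpl. rewrite <- (cls_rep f). apply Rid_r.
  - intros A B C' D f g h. simpl.
    rewrite <- (cls_rep f), <- (cls_rep g), <- (cls_rep h). apply Rassoc.
Qed.


Lemma R_R1 {C : LData} (HC : isLC C) {M N : C} (p : Span C M N) :
  Rcmp HC (Rrst (cls p)) (cls p) = cls p.
Proof.
  pose proof (lc_cat _ HC) as K. rewrite (Rrst_cls HC).
  rewrite (Rcmp_char HC (mkSpan (sp_ob p) (sp_eq p) (Ep p)) p (sp_ob p) (sp_eq p) (idm _) (idm _)).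
  - rewrite (cat_idl _ K). destruct p; reflexivity.
  - simpl. pose proof (pb_monic K (idm _) (Ep p) (Ep_monic HC p)) as H.
    rewrite (cat_idl _ K) in H. exact H.
  - simpl. rewrite (cat_idl _ K). reflexivity.
Qed.

Lemma R_R2 {C : LData} (HC : isLC C) {M N P : C} (p : Span C M N) (q : Span C M P) :
  Rcmp HC (Rrst (cls p)) (Rrst (cls q)) = Rcmp HC (Rrst (cls q)) (Rrst (cls p)).
Proof.
  pose proof (lc_cat _ HC) as K. rewrite !(Rrst_cls HC).
  set (p' := mkSpan (sp_ob p) (sp_eq p) (Ep p)).
  set (q' := mkSpan (sp_ob q) (sp_eq q) (Ep q)).
  destruct (pb_span_exists HC p' q') as [W [e [m [k [H H']]]]].
  rewrite (Rcmp_char HC p' q' W e m k H H').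
  rewrite (Rcmp_char HC q' p' W e k m).
  - apply f_equal, span_ext. simpl. symmetry. apply H.
  - apply pb_sym. exact H.
  - simpl. rewrite <- H'. symmetry. apply H.
Qed.

Lemma R_R3 {C : LData} (HC : isLC C) {M N P : C} (p : Span C M N) (q : Span C M P) :
  Rcmp HC (Rrst (cls q)) (Rrst (cls p)) = Rrst (Rcmp HC (Rrst (cls q)) (cls p)).
Proof.
  pose proof (lc_cat _ HC) as K. rewrite !(Rrst_cls HC).
  set (p' := mkSpan (sp_ob p) (sp_eq p) (Ep p)).
  set (q' := mkSpan (sp_ob q) (sp_eq q) (Ep q)).
  destruct (pb_span_exists HC q' p') as [W [e [m [k [H H']]]]].
  rewrite (Rcmp_char HC q' p' W e m k H H').
  assert (H2 : is_pullback m k (sp_mor q') (Ep p)) by exact H.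
  rewrite (Rcmp_char HC q' p W e m k H2 H').
  rewrite (Rrst_cls HC). apply f_equal, span_ext. simpl. rewrite Ep_mk, <- H'. symmetry. apply H.
Qed.

Lemma R_R4 {C : LData} (HC : isLC C) {M N P : C} (p : Span C M N) (q : Span C N P) :
  Rcmp HC (cls p) (Rrst (cls q)) = Rcmp HC (Rrst (Rcmp HC (cls p) (cls q))) (cls p).
Proof.
  pose proof (lc_cat _ HC) as K. rewrite !(Rrst_cls HC).
  set (q' := mkSpan (sp_ob q) (sp_eq q) (Ep q)).
  destruct (pb_span_exists HC p q) as [W [e [m [k [H H']]]]].
  assert (H2 : is_pullback m k (sp_mor p) (Ep q')) by exact H.
  rewrite (Rcmp_char HC p q' W e m k H2 H').
  rewrite (Rcmp_char HC p q W e m k H H').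
  rewrite (Rrst_cls HC). simpl.
  set (w := mkSpan W e (Ep (mkSpan W e (k ;; sp_mor q)))).
  rewrite (Rcmp_char HC w p W e (idm _) m).
  - apply f_equal, span_ext. simpl. symmetry. apply H.
  - simpl. rewrite Ep_mk, <- H'. pose proof (pb_monic K m (Ep p) (Ep_monic HC p)) as Hm.
    exact Hm.
  - simpl. rewrite (cat_idl _ K). reflexivity.
Qed.

Lemma RD_isRC {C : LData} (HC : isLC C) : isRC (RD C HC).
Proof.
  split.
  - apply RD_isCat.
  - intros A B f. simpl. rewrite <- (cls_rep f). apply R_R1.
  - intros A B C' f g. simpl. rewrite <- (cls_rep f), <- (cls_rep g). apply R_R2.
  - intros A B C' f g. simpl. rewrite <- (cls_rep f), <- (cls_rep g). apply R_R3.
  - intros A B C' f g. simpl. rewrite <- (cls_rep f), <- (cls_rep g). apply R_R4.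
Qed.


Lemma RF_Ep {C D : LData} {F : FData C D} (HF : isLFunctor F) {M N : C} (p : Span C M N) :
  fm F (Ep p) = Ep (RF_span HF p).
Proof.
  unfold Ep. simpl. rewrite fm_tr.
  rewrite <- (lf_eta _ HF (sp_ob p)). rewrite !tr_tr. apply tr_irr.
Qed.

Lemma RF_iso {C D : LData} {F : FData C D} (HF : isLFunctor F) {M N : C} (p q : Span C M N) :
  sp_iso' p q -> sp_iso' (RF_span HF p) (RF_span HF q).
Proof.
  pose proof (lf_fun _ HF) as FF.
  intros [u [v [[H1 H2] [H3 H4]]]]. exists (fm F u), (fm F v). repeat split.
  - etransitivity; [symmetry; apply (f_cmp _ FF)|]. rewrite H1. apply (f_id _ FF).
  - etransitivity; [symmetry; apply (f_cmp _ FF)|]. rewrite H2. apply (f_id _ FF).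
  - rewrite <- !RF_Ep. etransitivity; [symmetry; apply (f_cmp _ FF)|]. rewrite H3. reflexivity.
  - simpl. etransitivity; [symmetry; apply (f_cmp _ FF)|]. rewrite H4. reflexivity.
Qed.

Lemma RF_cls {C D : LData} (HC : isLC C) (HD : isLC D) {F : FData C D} (HF : isLFunctor F)
  {M N : C} (p : Span C M N) :
  cls (RF_span HF (rep (cls p))) = cls (RF_span HF p).
Proof.
  apply cls_eq; auto. apply RF_iso. apply sp_iso'_sym; auto. apply rep_cls; auto.
Qed.

Lemma pb_tr_back {C : Cat} {P A B D D' : C} (p1 : hom P A) (p2 : hom P B) (f : hom A D) (g : hom B D)
  (e : D = D') : is_pullback p1 p2 (tr e f) (tr e g) -> is_pullback p1 p2 f g.
Proof. destruct e. auto. Qed.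

Lemma F_pb_span {C D : LData} {F : FData C D} (HF : isLFunctor F) {M N P : C}
  (p : Span C M N) (q : Span C N P) (W : C) (m : hom W (sp_ob p)) (k : hom W (sp_ob q)) :
  is_pullback m k (sp_mor p) (Ep q) ->
  is_pullback (fm F m) (fm F k) (fm F (sp_mor p)) (fm F (Ep q)).
Proof.
  intros H. unfold Ep in *. destruct q as [V e g]. simpl in *. subst N.
  simpl in *. apply (lf_pb _ HF) in H. exact H.
Qed.

Lemma RF_isRFunctor {C D : LData} (HC : isLC C) (HD : isLC D) {F : FData C D}
  (HF : isLFunctor F) : isRFunctor (RF HC HD HF).
Proof.
  pose proof (lf_fun _ HF) as FF. pose proof (lc_cat _ HD) as KD. split; [split|].
  - intros A. simpl. unfold Ridm. rewrite (RF_cls HC HD). unfold RF_span. simpl.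
    apply f_equal. apply span_ext. apply (f_id _ FF).
  - intros A B E x y. simpl. rewrite <- (cls_rep x), <- (cls_rep y).
    generalize (rep x) (rep y). clear x y. intros p q.
    destruct (pb_span_exists HC p q) as [W [e [m [k [H H']]]]].
    rewrite (Rcmp_char HC p q W e m k H H').
    rewrite !(RF_cls HC HD).
    rewrite (Rcmp_char HD (RF_span HF p) (RF_span HF q) (F W)
               (sp_eq (RF_span HF (mkSpan W e (k ;; sp_mor q)))) (fm F m) (fm F k)).
    + unfold RF_span at 1. simpl. apply f_equal, span_ext. apply (f_cmp _ FF).
    + rewrite <- RF_Ep. apply (F_pb_span HF). exact H.
    + rewrite <- RF_Ep. apply (fm_cmp2 FF). rewrite H'.
      change (tr (sp_eq (RF_span HF (mkSpan W e (k;; sp_mor q)))) (eta (F W)))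
        with (Ep (RF_span HF (mkSpan W e (k;; sp_mor q)))).
      rewrite <- RF_Ep. reflexivity.
  - intros A B x. simpl. rewrite <- (cls_rep x). generalize (rep x). clear x. intros p.
    rewrite !(Rrst_cls HC), (RF_cls HC HD). rewrite (RF_cls HC HD), (Rrst_cls HD).
    apply f_equal. unfold RF_span. simpl. apply span_ext. apply RF_Ep.
Qed.


Lemma Rcmp_tot_r {C : LData} (HC : isLC C) {M N P : C} (p : Span C M N) (e : Lo N = N)
  (g : hom N P) : tr e (eta N) = idm N ->
  Rcmp HC (cls p) (cls (mkSpan N e g)) = cls (mkSpan (sp_ob p) (sp_eq p) (sp_mor p ;; g)).
Proof.
  pose proof (lc_cat _ HC) as K. intros He.
  rewrite (Rcmp_char HC p (mkSpan N e g) (sp_ob p) (sp_eq p) (idm _) (sp_mor p ;; idm _)).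
  - simpl. rewrite (cat_idr _ K). reflexivity.
  - rewrite Ep_mk, He. apply pb_iso_r; auto. split; apply (cat_idl _ K).
  - rewrite (cat_idl _ K). reflexivity.
Qed.

Lemma RF_fm {C D : LData} (HC : isLC C) (HD : isLC D) {F : FData C D} (HF : isLFunctor F)
  {M N : TObj C} (p : Span C (to_ob M) (to_ob N)) :
  fm (RF HC HD HF) (A := M) (B := N) (cls p) = cls (RF_span HF p).
Proof. simpl. apply (RF_cls HC HD). Qed.

Lemma hRN_proof (C D : LData) (HC : isLC C) (HD : isLC D) (F G : FData C D)
  (HF : isLFunctor F) (HG : isLFunctor G) (a : NT F G) :
  isLNT a -> isRNT (RN HC HD HF HG a).
Proof.
  pose proof (lc_cat _ HD) as KD. intros Ha. split.
  - intros M. unfold rtotal. simpl. unfold RN. rewrite (Rrst_cls HD). unfold Ridm.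
    apply f_equal, span_ext. simpl. apply (RF_eta HF M).
  - intros M N x. rewrite <- (cls_rep x). generalize (rep x). clear x. intros p.
    change (Rcmp HD (fm (RF HC HD HF) (A := M) (B := N) (cls p)) (RN HC HD HF HG a N) =
            Rcmp HD (Rcmp HD (fm (RF HC HD HF) (A := M) (B := M) (Rrst (cls p)))
                               (RN HC HD HF HG a M))
                     (fm (RF HC HD HG) (A := M) (B := N) (cls p))).
    rewrite (Rrst_cls HC), !RF_fm. unfold RN.
    cbn [to_ob fo RF RF_ob].
    rewrite (Rcmp_tot_r HD (RF_span HF p) (RF_eq HF N) (a (to_ob N)) (RF_eta HF N)).
    rewrite (Rcmp_tot_r HD (RF_span HF (mkSpan (sp_ob p) (sp_eq p) (Ep p))) (RF_eq HF M) (a (to_ob M)) (RF_eta HF M)).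
    simpl.
    assert (Hpb : is_pullback (idm _) (a (sp_ob p)) (fm F (Ep p) ;; a (to_ob M)) (Ep (RF_span HG p))).
    { rewrite <- (RF_Ep HG), (Ha _ _ (Ep p)). apply pb_monic; auto.
      rewrite (RF_Ep HG). exact (Ep_monic HD (RF_span HG p)). }
    assert (Hc : idm _ ;; Ep (mkSpan (F (sp_ob p)) (sp_eq (RF_span HF p)) (fm F (Ep p) ;; a (to_ob M)))
                 = tr (sp_eq (RF_span HF p)) (eta (F (sp_ob p)))).
    { rewrite (cat_idl _ KD). reflexivity. }
    pose proof (Rcmp_char HD (mkSpan (F (sp_ob p)) (sp_eq (RF_span HF p)) (fm F (Ep p) ;; a (to_ob M))) (RF_span HG p) (F (sp_ob p)) (sp_eq (RF_span HF p)) (idm _) (a (sp_ob p)) Hpb Hc) as E.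
    symmetry. etransitivity; [exact E|].
    apply f_equal, span_ext. simpl. symmetry. apply Ha.
Qed.

Lemma tot_pb {C D : LData} {F G : FData C D} (a : NT F G) (Ha : isLTotNT a)
  (M U : C) (e : Lo U = M) :
  is_pullback (fm F (tr e (eta U))) (a U) (a M) (fm G (tr e (eta U))).
Proof. destruct e. simpl. apply pb_sym. apply (proj2 Ha). Qed.

Lemma RN_tot (C D : LData) (HC : isLC C) (HD : isLC D) (F G : FData C D)
  (HF : isLFunctor F) (HG : isLFunctor G) (a : NT F G) :
  isLTotNT a -> isRTotNT (RN HC HD HF HG a).
Proof.
  pose proof (lc_cat _ HD) as KD. intros Ha. split.
  - apply hRN_proof. apply Ha.
  - intros M N x. rewrite <- (cls_rep x). generalize (rep x). clear x. intros p.
    change (Rcmp HD (fm (RF HC HD HF) (A := M) (B := N) (cls p)) (RN HC HD HF HG a N) =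
            Rcmp HD (RN HC HD HF HG a M) (fm (RF HC HD HG) (A := M) (B := N) (cls p))).
    rewrite !RF_fm. unfold RN. cbn [to_ob fo RF RF_ob].
    rewrite (Rcmp_tot_r HD (RF_span HF p) (RF_eq HF N) (a (to_ob N)) (RF_eta HF N)).
    rewrite (Rcmp_char HD (mkSpan (F (to_ob M)) (RF_eq HF M) (a (to_ob M))) (RF_span HG p) (F (sp_ob p)) (sp_eq (RF_span HF p))
               (fm F (Ep p)) (a (sp_ob p))).
    + apply f_equal, span_ext. simpl. apply (proj1 Ha).
    + simpl. rewrite <- RF_Ep. apply tot_pb. exact Ha.
    + rewrite Ep_mk, (RF_eta HF M), (cat_idr _ KD). apply RF_Ep.
Qed.


Lemma rst_rst {X : RData} (HX : isRC X) {A B : X} (f : hom A B) : rst (rst f) = rst f.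
Proof.
  pose proof (R3 _ HX _ _ _ (idm A) f) as H. rewrite (rst_id HX), !(cat_idr _ (rc_cat _ HX)) in H.
  symmetry. exact H.
Qed.

Lemma rst_fg_f {X : RData} (HX : isRC X) {A B C : X} (f : hom A B) (g : hom B C) :
  rst (f ;; g) ;; rst f = rst (f ;; g).
Proof.
  rewrite (R3 _ HX). rewrite <- (R4 _ HX). apply (rst_cmp_rst HX).
Qed.

Lemma rst_total {X : RData} (HX : isRC X) {A B C : X} (f : hom A B) (g : hom B C) :
  rst g = idm B -> rst (f ;; g) = rst f.
Proof.
  intros H. rewrite <- (rst_cmp_rst HX), H, (cat_idr _ (rc_cat _ HX)). reflexivity.
Qed.

Lemma LHom_ext {X : RData} {x y : LObj X} (f g : LHom X x y) : lh f = lh g -> f = g.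
Proof.
  destruct f as [f1 f2 f3], g as [g1 g2 g3]. simpl. intros <-.
  rewrite (proof_irrelevance _ f2 g2), (proof_irrelevance _ f3 g3). reflexivity.
Qed.

Lemma LObj_ext {X : RData} (A : X) (a b : hom A A) (ha : rst a = a) (hb : rst b = b) :
  a = b -> mkLObj A a ha = mkLObj A b hb.
Proof. intros <-. rewrite (proof_irrelevance _ ha hb). reflexivity. Qed.

Lemma LObj_inj {X : RData} (A : X) (a b : hom A A) (ha : rst a = a) (hb : rst b = b) :
  mkLObj A a ha = mkLObj A b hb -> a = b.
Proof.
  intros H.
  pose proof (f_equal (fun x : LObj X => existT (fun B : X => hom B B) (lo_ob x) (lo_id x)) H) as H'.
  simpl in H'. apply Eqdep.EqdepTheory.inj_pair2 in H'. exact H'.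
Qed.

Lemma LHom_tr {X : RData} (HX : isRC X) {x y y' : LObj X} (e : y = y')
  (h : LHom X x y) (h' : LHom X x y') :
  JMeq (lh h) (lh h') -> @tr (LCat X HX) x y y' e h = h'.
Proof. destruct e. intros H. apply JMeq_eq in H. apply LHom_ext. exact H. Qed.

Lemma LHom_JMeq {X : RData} {x x' y y' : LObj X} (f : LHom X x y) (g : LHom X x' y') :
  x = x' -> y = y' -> JMeq (lh f) (lh g) -> JMeq f g.
Proof.
  intros <- <- H. apply JMeq_eq in H. apply LHom_ext in H. subst. reflexivity.
Qed.

Lemma LD_isCat {X : RData} (HX : isRC X) : isCat (LCat X HX).
Proof.
  pose proof (rc_cat _ HX) as K. split.
  - intros A B f. apply LHom_ext. simpl. rewrite <- (lh_r f). apply (R1 _ HX).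
  - intros A B f. apply LHom_ext. simpl. apply (lh_c f).
  - intros A B C' D f g h. apply LHom_ext. simpl. apply (cat_assoc _ K).
Qed.


Lemma Lpb_m_c {X : RData} (HX : isRC X) {N M : LObj X} (f : LHom X N (Lo_L HX M)) :
  rst (lh f ;; lo_id M) ;; lo_id N = rst (lh f ;; lo_id M).
Proof. simpl. rewrite <- (lh_r f). apply rst_fg_f; auto. Qed.

Lemma Lpb_k_c {X : RData} (HX : isRC X) {N M : LObj X} (f : LHom X N (Lo_L HX M)) :
  (lh f ;; lo_id M) ;; lo_id M = lh f ;; lo_id M.
Proof. simpl. rewrite (cat_assoc _ (rc_cat _ HX)), (ridem HX _ (lo_ok M)). reflexivity. Qed.

Definition Lpb_ob {X : RData} (HX : isRC X) {N M : LObj X} (f : LHom X N (Lo_L HX M)) : LObj X :=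
  mkLObj (lo_ob N) (rst (lh f ;; lo_id M)) (rst_rst HX _).

Definition Lpb_m {X : RData} (HX : isRC X) {N M : LObj X} (f : LHom X N (Lo_L HX M))
  : LHom X (Lpb_ob HX f) N :=
  mkLHom (x := Lpb_ob HX f) (rst (lh f ;; lo_id M)) (rst_rst HX _) (Lpb_m_c HX f).

Definition Lpb_k {X : RData} (HX : isRC X) {N M : LObj X} (f : LHom X N (Lo_L HX M))
  : LHom X (Lpb_ob HX f) M :=
  mkLHom (x := Lpb_ob HX f) (lh f ;; lo_id M) eq_refl (Lpb_k_c HX f).

Lemma Lpb_is {X : RData} (HX : isRC X) {N M : LObj X} (f : LHom X N (Lo_L HX M)) :
  @is_pullback (LCat X HX) _ _ _ _ (Lpb_m HX f) (Lpb_k HX f) f (eta_L HX M).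
Proof.
  pose proof (rc_cat _ HX) as K. split.
  - apply LHom_ext. simpl. rewrite <- (R4 _ HX), (lo_ok M). symmetry. apply (Lpb_k_c HX f).
  - intros Q q1 q2 Hq. apply (f_equal lh) in Hq. simpl in Hq.
    assert (E : lh q1 ;; rst (lh f ;; lo_id M) = lh q1).
    { rewrite (R4 _ HX), <- (cat_assoc _ K). simpl. rewrite Hq, (lh_c q2), (lh_c q2), (lh_r q2), <- (lh_r q1). apply (R1 _ HX). }
    unshelve eexists (mkLHom (x := Q) (y := Lpb_ob HX f) (lh q1) (lh_r q1) E).
    split.
    + split; apply LHom_ext; simpl; auto.
      rewrite <- (cat_assoc _ K), Hq, (lh_c q2), (lh_c q2). reflexivity.
    + intros u' [H1 H2]. apply LHom_ext. simpl. apply (f_equal lh) in H1. simpl in H1.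
      rewrite <- H1. apply (lh_c u').
Qed.

Lemma LD_isLC (X : RData) (HX : isRC X) : isLC (LD X HX).
Proof.
  pose proof (rc_cat _ HX) as K.
  unshelve econstructor.
  - intros M. reflexivity.
  - apply LD_isCat.
  - intros M. apply LHom_ext. reflexivity.
  - intros M Z g h H. apply (f_equal lh) in H. simpl in H. apply LHom_ext.
    rewrite (lh_c g), (lh_c h) in H. exact H.
  - intros M N f. exists (Lpb_ob HX f), (Lpb_m HX f), (Lpb_k HX f), eq_refl. split.
    + apply Lpb_is.
    + apply LHom_ext. simpl. apply Lpb_m_c.
Qed.


Lemma LF_isLFunctor (X Y : RData) (HX : isRC X) (HY : isRC Y) (F : FData X Y)
  (HF : isRFunctor F) : isLFunctor (LF HX HY HF).
Proof.
  pose proof (proj1 HF) as FF. pose proof (rc_cat _ HX) as KX. pose proof (rc_cat _ HY) as KY.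
  unshelve econstructor.
  - intros M. simpl. unfold LF_ob, Lo_L. simpl. apply LObj_ext. apply (f_id _ FF).
  - split.
    + intros A. apply LHom_ext. reflexivity.
    + intros A B E f g. apply LHom_ext. simpl. apply (f_cmp _ FF).
  - intros M. apply LHom_tr. simpl. reflexivity.
  - intros M N P f p1 p2 Hpb.
    destruct (pb_unique_iso (LD_isCat HX) _ _ _ _ _ _ Hpb (Lpb_is HX f))
      as [u [v [[Huv Hvu] [Hu1 Hu2]]]].
    assert (Ev1 : lh v ;; lh p1 = rst (lh f ;; lo_id N)).
    { assert (lh u = lh p1) as Eu.
      { apply (f_equal lh) in Hu1. simpl in Hu1. rewrite <- Hu1. symmetry. apply (lh_c u). }
      apply (f_equal lh) in Hvu. simpl in Hvu. rewrite <- Eu. exact Hvu. }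
    assert (Ev2 : lh p1 ;; lh v = lo_id P).
    { assert (lh u = lh p1) as Eu.
      { apply (f_equal lh) in Hu1. simpl in Hu1. rewrite <- Hu1. symmetry. apply (lh_c u). }
      apply (f_equal lh) in Huv. simpl in Huv. rewrite <- Eu. exact Huv. }
    assert (Ev3 : lh v ;; lh p2 = lh f ;; lo_id N).
    { assert (E : v ;; p2 = Lpb_k HX f).
      { rewrite <- Hu2. rewrite <- (cat_assoc _ (LD_isCat HX)), Hvu. apply (cat_idl _ (LD_isCat HX)). }
      apply (f_equal lh) in E. exact E. }
    destruct Hpb as [Hc _].
    split.
    + apply LHom_ext. simpl. rewrite <- !(f_cmp _ FF). apply (f_equal lh) in Hc. simpl in Hc.
      rewrite Hc. reflexivity.
    + intros Q q1 q2 Hq. apply (f_equal lh) in Hq. simpl in Hq.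
      assert (E1 : lh q1 ;; fm F (rst (lh f ;; lo_id N)) = lh q1).
      { pose proof (lh_c q2) as Cq2. pose proof (lh_r q2) as Rq2. pose proof (lh_r q1) as Rq1.
        simpl in *.
        rewrite (proj2 HF), (f_cmp _ FF), (R4 _ HY), <- (cat_assoc _ KY). simpl. rewrite Hq.
        rewrite Cq2, Cq2, Rq2, <- Rq1. apply (R1 _ HY). }
      assert (Er : rst (lh q1 ;; fm F (lh v)) = lo_id Q).
      { pose proof (lh_r v) as Rv. pose proof (lh_r q1) as Rq1. simpl in *. rewrite <- (rst_cmp_rst HY), <- (proj2 HF), Rv. rewrite E1. apply Rq1. }
      assert (Ec : (lh q1 ;; fm F (lh v)) ;; fm F (lo_id P) = lh q1 ;; fm F (lh v)).
      { pose proof (lh_c v) as Cv. simpl in *. rewrite (cat_assoc _ KY), <- (f_cmp _ FF), Cv. reflexivity. }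
      exists (mkLHom (x := Q) (y := LF_ob HF P) (lh q1 ;; fm F (lh v)) Er Ec).
      split.
      * split; apply LHom_ext; simpl.
        -- rewrite (cat_assoc _ KY), <- (f_cmp _ FF). etransitivity; [|exact E1]. do 2 f_equal. exact Ev1.
        -- rewrite (cat_assoc _ KY), <- (f_cmp _ FF).
           transitivity (lh q1 ;; fm F (lh f ;; lo_id N)); [do 2 f_equal; exact Ev3|].
           pose proof (lh_c q2) as Cq2. simpl in *.
           rewrite (f_cmp _ FF), <- (cat_assoc _ KY), Hq, Cq2, Cq2. reflexivity.
      * intros u' [H1 H2]. apply LHom_ext. simpl. apply (f_equal lh) in H1. simpl in H1.
        pose proof (lh_c u') as Cu. simpl in *.
        rewrite <- H1, (cat_assoc _ KY), <- (f_cmp _ FF).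
        transitivity (lh u' ;; fm F (lo_id P)); [do 2 f_equal; exact Ev2|]. exact Cu.
Qed.

Lemma LN_isLNT (X Y : RData) (HX : isRC X) (HY : isRC Y) (F G : FData X Y)
  (HF : isRFunctor F) (HG : isRFunctor G) (a : NT F G) (Ha : isRNT a) :
  isLNT (LN HX HY HF HG Ha).
Proof.
  pose proof (rc_cat _ HY) as KY.
  intros x y f. apply LHom_ext. simpl.
  rewrite <- (cat_assoc _ KY), <- (f_cmp _ (proj1 HF)), (lh_c f).
  rewrite (proj2 Ha), (lh_r f). reflexivity.
Qed.

Lemma LN_tot (X Y : RData) (HX : isRC X) (HY : isRC Y) (F G : FData X Y)
  (HF : isRFunctor F) (HG : isRFunctor G) (a : NT F G) (Ha : isRNT a) :
  isRTotNT a -> isLTotNT (LN HX HY HF HG Ha).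
Proof.
  pose proof (rc_cat _ HY) as KY. pose proof (proj1 HF) as FF.
  intros [_ Hn]. split; [apply LN_isLNT|].
  intros x. destruct x as [A a0 ha]. split.
  - apply LHom_ext. simpl. rewrite (f_id _ FF), (cat_idl _ KY).
    exact (LN_c Ha (mkLObj A a0 ha)).
  - intros Q q1 q2 Hq. apply (f_equal lh) in Hq.
    destruct q1 as [q1 r1 c1], q2 as [q2 r2 c2]. simpl in *.
    rewrite (f_id _ FF), (cat_idl _ KY), c1 in Hq.
    assert (Hfa : rst (fm F a0) = fm F a0) by (rewrite <- (proj2 HF), ha; reflexivity).
    assert (E0 : rst (q2 ;; fm F a0) = lo_id Q).
    { rewrite <- (rst_total HY (q2 ;; fm F a0) (a A) (proj1 Ha A)), (cat_assoc _ KY), (Hn _ _ a0),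
        <- (cat_assoc _ KY), <- Hq, c1. exact r1. }
    assert (E2 : q2 ;; fm F a0 = q2).
    { rewrite <- Hfa, (R4 _ HY), E0, <- r2. apply (R1 _ HY). }
    assert (Ec2 : q2 ;; lo_id (LF_ob HF (mkLObj A a0 ha)) = q2) by (simpl; exact E2).
    exists (mkLHom (x := Q) (y := LF_ob HF (mkLObj A a0 ha)) q2 r2 Ec2).
    split.
    + split; apply LHom_ext; simpl.
      * rewrite <- (cat_assoc _ KY), E2. symmetry. exact Hq.
      * exact E2.
    + intros u' [H1 H2]. apply LHom_ext. simpl. apply (f_equal lh) in H2. simpl in H2.
      pose proof (lh_c u') as Cu. simpl in Cu. rewrite <- H2. exact Cu.
Qed.


Lemma TObj_ext {C : LData} (M N : TObj C) : to_ob M = to_ob N -> M = N.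
Proof.
  destruct M as [M e h], N as [N e' h']. simpl. intros <-.
  destruct (proof_irrelevance _ e e'). rewrite (proof_irrelevance _ h h'). reflexivity.
Qed.

Lemma JMeq_cls {C : LData} {M M' N N' : C} (p : Span C M N) (q : Span C M' N') :
  M = M' -> N = N' -> sp_ob p = sp_ob q -> JMeq (sp_mor p) (sp_mor q) -> JMeq (cls p) (cls q).
Proof.
  destruct p as [U e f], q as [V e' g]. simpl. intros <- <- <- H.
  apply JMeq_eq in H. rewrite H. rewrite (proof_irrelevance _ e e'). reflexivity.
Qed.

Lemma L_span_eq {X : RData} (HX : isRC X) {M N : LObj X} (A : X) (a b : hom A A)
  (ha : rst a = a) (hb : rst b = b)
  (E : Lo_L HX (mkLObj A a ha) = M) (E' : Lo_L HX (mkLObj A b hb) = M)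
  (f : LHom X (mkLObj A a ha) N) (g : LHom X (mkLObj A b hb) N) :
  a = b -> lh f = lh g ->
  @mkSpan (LD X HX) M N (mkLObj A a ha) E f = @mkSpan (LD X HX) M N (mkLObj A b hb) E' g.
Proof.
  intros <- H. destruct (proof_irrelevance _ ha hb).
  rewrite (proof_irrelevance _ E E'). apply LHom_ext in H. subst. reflexivity.
Qed.

Lemma uob_eta {X : RData} (HX : isRC X) (A : X) :
  @tr (LD X HX) _ _ _ (@eq_refl (LObj X) (mkLObj A (idm A) (rst_id HX A)))
    (@eta (LD X HX) (mkLObj A (idm A) (rst_id HX A))) = @idm (LD X HX) (mkLObj A (idm A) (rst_id HX A)).
Proof. apply LHom_ext. reflexivity. Qed.

Definition uob {X : RData} (HX : isRC X) (A : X) : TObj (LD X HX) :=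
  mkTObj (C := LD X HX) (mkLObj A (idm A) (rst_id HX A)) eq_refl (uob_eta HX A).

Lemma umor_c {X : RData} (HX : isRC X) {A B : X} (f : hom A B) : f ;; idm B = f.
Proof. apply (cat_idr _ (rc_cat _ HX)). Qed.

Definition uspan {X : RData} (HX : isRC X) {A B : X} (f : hom A B)
  : Span (LD X HX) (to_ob (uob HX A)) (to_ob (uob HX B)) :=
  @mkSpan (LD X HX) (to_ob (uob HX A)) (to_ob (uob HX B))
    (mkLObj A (rst f) (rst_rst HX f)) eq_refl
    (mkLHom (x := mkLObj A (rst f) (rst_rst HX f)) (y := to_ob (uob HX B)) f eq_refl (umor_c HX f)).

Definition umor {X : RData} (HX : isRC X) {A B : X} (f : hom A B)
  : @hom (RD (LD X HX) (LD_isLC X HX)) (uob HX A) (uob HX B) :=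
  cls (uspan HX f).

Definition Ufun (X : RData) (HX : isRC X) : FData X (RD (LD X HX) (LD_isLC X HX)) :=
  @mkF X (RD (LD X HX) (LD_isLC X HX)) (uob HX) (fun A B f => umor HX f).

Lemma umor_id {X : RData} (HX : isRC X) (A : X) : umor HX (idm A) = Ridm (uob HX A).
Proof.
  unfold umor, Ridm. apply f_equal. unfold uspan. simpl. apply L_span_eq.
  - apply (rst_id HX).
  - reflexivity.
Qed.

Lemma umor_cmp {X : RData} (HX : isRC X) {A B C : X} (f : hom A B) (g : hom B C) :
  umor HX (f ;; g) = Rcmp (LD_isLC X HX) (umor HX f) (umor HX g).
Proof.
  pose proof (rc_cat _ HX) as K. unfold umor.
  set (p := uspan HX f). set (q := uspan HX g).
  assert (Hpb : is_pullback (C := LCat X HX) (Lpb_m HX (sp_mor p) (M := sp_ob q))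
                  (Lpb_k HX (sp_mor p) (M := sp_ob q)) (sp_mor p) (Ep q)).
  { apply (Lpb_is HX (sp_mor p) (M := sp_ob q)). }
  assert (Hc : @cmp (LCat X HX) _ _ _ (Lpb_m HX (sp_mor p) (M := sp_ob q)) (Ep p)
               = @tr (LCat X HX) _ _ _ (@eq_refl _ (Lo_L HX (Lpb_ob HX (sp_mor p) (M := sp_ob q))))
                   (eta_L HX (Lpb_ob HX (sp_mor p) (M := sp_ob q)))).
  { apply LHom_ext. simpl. apply (rst_fg_f HX). }
  rewrite (Rcmp_char (LD_isLC X HX) p q (Lpb_ob HX (sp_mor p) (M := sp_ob q))
     (@eq_refl _ (Lo_L HX (Lpb_ob HX (sp_mor p) (M := sp_ob q)))) _ _ Hpb Hc).
  apply f_equal. unfold p, q, uspan. simpl. apply L_span_eq.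
  - symmetry. apply (rst_cmp_rst HX).
  - simpl. rewrite (cat_assoc _ K). f_equal. symmetry. apply (R1 _ HX).
Qed.


Lemma umor_rst {X : RData} (HX : isRC X) {A B : X} (f : hom A B) :
  umor HX (rst f) = Rrst (umor HX f).
Proof.
  unfold umor. rewrite (Rrst_cls (LD_isLC X HX)). apply f_equal. unfold uspan. simpl.
  apply L_span_eq; simpl.
  - apply (rst_rst HX).
  - reflexivity.
Qed.

Lemma Ufun_isRFunctor (X : RData) (HX : isRC X) : isRFunctor (Ufun X HX).
Proof.
  split; [split|].
  - intros A. simpl. apply umor_id.
  - intros A B C f g. simpl. apply umor_cmp.
  - intros A B f. simpl. apply umor_rst.
Qed.

Lemma TObj_norm {X : RData} (HX : isRC X) (M : TObj (LD X HX)) : exists A, M = uob HX A.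
Proof.
  destruct M as [[A a ha] e he]. exists A.
  assert (Ea : idm A = a) by exact (LObj_inj A (idm A) a (rst_id HX A) ha e). subst a.
  apply TObj_ext. simpl. apply LObj_ext. reflexivity.
Qed.

Lemma cls_norm {X : RData} (HX : isRC X) {A B : X}
  (x : RHom (C := LD X HX) (to_ob (uob HX A)) (to_ob (uob HX B))) : exists f : hom A B, x = umor HX f.
Proof.
  rewrite <- (cls_rep x). destruct (rep x) as [[A' a ha] e f].
  pose proof (f_equal (@lo_ob X) e) as EA. simpl in EA. subst A'.
  exists (lh f). unfold umor, uspan. apply f_equal. apply L_span_eq.
  - symmetry. exact (lh_r f).
  - reflexivity.
Qed.

Definition trd {C : Cat} {A A' B : C} (e : A = A') (h : hom A B) : hom A' B :=
  eq_rect A (fun Z => hom Z B) h A' e.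

Definition Gspan {X : RData} (HX : isRC X) {M N : LObj X} (p : Span (LD X HX) M N)
  : hom (lo_ob M) (lo_ob N) :=
  @trd X (lo_ob (sp_ob p)) (lo_ob M) (lo_ob N) (f_equal (@lo_ob X) (sp_eq p)) (lh (sp_mor p)).

Definition Gmor {X : RData} (HX : isRC X) {M N : LObj X} (x : RHom (C := LD X HX) M N)
  : hom (lo_ob M) (lo_ob N) := Gspan HX (rep x).

Lemma Gspan_iso {X : RData} (HX : isRC X) {A B : X}
  (p q : Span (LD X HX) (to_ob (uob HX A)) (to_ob (uob HX B))) :
  sp_iso' p q -> Gspan HX p = Gspan HX q.
Proof.
  pose proof (rc_cat _ HX) as K.
  destruct p as [[A1 a ha] e f], q as [[A2 b hb] e' g].
  pose proof (f_equal (@lo_ob X) e) as E1. simpl in E1. subst A1.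
  pose proof (f_equal (@lo_ob X) e') as E2. simpl in E2. subst A2.
  unfold Gspan. simpl.
  rewrite (proof_irrelevance _ e eq_refl), (proof_irrelevance _ e' eq_refl). simpl.
  intros [u [v [[Huv Hvu] [H1 H2]]]]. simpl in *.
  assert (Eu : lh u = a).
  { apply (f_equal lh) in H1. simpl in H1. rewrite <- H1. symmetry. apply (lh_c u). }
  assert (Ev : lh v = b).
  { pose proof (f_equal lh Hvu) as H3. simpl in H3. rewrite Eu in H3. rewrite <- H3.
    symmetry. apply (lh_c v). }
  apply (f_equal lh) in Huv. apply (f_equal lh) in Hvu. simpl in Huv, Hvu.
  rewrite Eu, Ev in Huv. rewrite Eu, Ev in Hvu.
  assert (Eab : a = b).
  { transitivity (a ;; b); [symmetry; exact Huv|]. transitivity (b ;; a); [|exact Hvu].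
    rewrite <- ha, <- hb. apply (R2 _ HX). }
  subst b. apply (f_equal lh) in H2. simpl in H2. pose proof (lh_r g) as Rg. simpl in Rg.
  rewrite <- H2, Eu. transitivity (rst (lh g) ;; lh g).
  - first [rewrite Rg; reflexivity | f_equal; symmetry; exact Rg].
  - apply (R1 _ HX).
Qed.

Lemma Gumor {X : RData} (HX : isRC X) {A B : X} (f : hom A B) :
  Gmor HX (umor HX f) = f.
Proof.
  unfold Gmor, umor. rewrite <- (Gspan_iso HX (uspan HX f)).
  - reflexivity.
  - apply rep_cls. apply LD_isLC.
Qed.

Lemma umorG {X : RData} (HX : isRC X) {A B : X}
  (x : RHom (C := LD X HX) (to_ob (uob HX A)) (to_ob (uob HX B))) : umor HX (Gmor HX x) = x.
Proof. destruct (cls_norm HX x) as [f ->]. rewrite Gumor. reflexivity. Qed.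


Lemma Rcmp_id_r' {C : LData} (HC : isLC C) {M : C} (N : TObj C) (x : RHom M (to_ob N)) :
  Rcmp HC x (Ridm N) = x.
Proof. rewrite <- (cls_rep x). apply Rid_r. Qed.

Lemma Rcmp_id_l' {C : LData} (HC : isLC C) (M : TObj C) {N : C} (x : RHom (to_ob M) N) :
  Rcmp HC (Ridm M) x = x.
Proof. rewrite <- (cls_rep x). apply Rid_l. Qed.

Lemma R1' {C : LData} (HC : isLC C) {M N : C} (x : RHom M N) : Rcmp HC (Rrst x) x = x.
Proof. rewrite <- (cls_rep x). apply R_R1. Qed.

Lemma Rrst_Ridm {C : LData} (HC : isLC C) (M : TObj C) : Rrst (Ridm M) = Ridm M.
Proof.
  unfold Ridm. rewrite (Rrst_cls HC). apply f_equal, span_ext. apply (to_eta M).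
Qed.

Definition Gfun (X : RData) (HX : isRC X) : FData (RD (LD X HX) (LD_isLC X HX)) X :=
  @mkF (RD (LD X HX) (LD_isLC X HX)) X (fun M => lo_ob (to_ob M)) (fun M N x => Gmor HX x).

Ltac rdsimp := cbn [fm fo Gfun Ufun cmp idm RD RCat rcat rst fid fcomp vcomp ntid whiskL whiskR] in *.

Lemma Gfun_isRFunctor (X : RData) (HX : isRC X) : isRFunctor (Gfun X HX).
Proof.
  split; [split|].
  - intros M. destruct (TObj_norm HX M) as [A ->]. rdsimp.
    rewrite <- umor_id. apply Gumor.
  - intros M N P x y. destruct (TObj_norm HX M) as [A ->]. destruct (TObj_norm HX N) as [B ->].
    destruct (TObj_norm HX P) as [C ->]. rdsimp.
    destruct (cls_norm HX x) as [f ->]. destruct (cls_norm HX y) as [g ->].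
    rewrite <- umor_cmp, !Gumor. reflexivity.
  - intros M N x. destruct (TObj_norm HX M) as [A ->]. destruct (TObj_norm HX N) as [B ->].
    rdsimp. destruct (cls_norm HX x) as [f ->].
    rewrite <- umor_rst, !Gumor. reflexivity.
Qed.

Definition uu (X : RData) (HX : isRC X) : NT (fid X) (fcomp (Ufun X HX) (Gfun X HX)) :=
  fun A => idm A.
Definition uu' (X : RData) (HX : isRC X) : NT (fcomp (Ufun X HX) (Gfun X HX)) (fid X) :=
  fun A => idm A.
Definition vv (X : RData) (HX : isRC X)
  : NT (fid (RD (LD X HX) (LD_isLC X HX))) (fcomp (Gfun X HX) (Ufun X HX)) :=
  fun M => @cls (LD X HX) (to_ob M) (to_ob (uob HX (lo_ob (to_ob M))))
             (@mkSpan (LD X HX) _ _ (to_ob M) (to_eq M) (eta_L HX (to_ob M))).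
Definition vv' (X : RData) (HX : isRC X)
  : NT (fcomp (Gfun X HX) (Ufun X HX)) (fid (RD (LD X HX) (LD_isLC X HX))) :=
  fun M => @cls (LD X HX) (to_ob (uob HX (lo_ob (to_ob M)))) (to_ob M)
             (@mkSpan (LD X HX) _ _ (Lo_L HX (to_ob M)) eq_refl
                (@tr (LCat X HX) _ _ _ (to_eq M) (LD_idm HX (Lo_L HX (to_ob M))))).

Lemma vv_uob (X : RData) (HX : isRC X) (A : X) : vv X HX (uob HX A) = Ridm (uob HX A).
Proof. unfold vv, Ridm. apply f_equal. apply L_span_eq; reflexivity. Qed.

Lemma vv'_uob (X : RData) (HX : isRC X) (A : X) : vv' X HX (uob HX A) = Ridm (uob HX A).
Proof. unfold vv', Ridm. apply f_equal. apply L_span_eq; reflexivity. Qed.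


Lemma uu_RNT (X : RData) (HX : isRC X) : isRNT (uu X HX) /\ isNat (uu X HX).
Proof.
  pose proof (rc_cat _ HX) as K. split; [split|].
  - intros A. apply (rst_id HX).
  - intros A B f. unfold uu. rdsimp. rewrite Gumor, !(cat_idr _ K). symmetry. apply (R1 _ HX).
  - intros A B f. unfold uu. rdsimp. rewrite Gumor, (cat_idr _ K), (cat_idl _ K). reflexivity.
Qed.

Lemma uu'_RNT (X : RData) (HX : isRC X) : isRNT (uu' X HX) /\ isNat (uu' X HX).
Proof.
  pose proof (rc_cat _ HX) as K. split; [split|].
  - intros A. apply (rst_id HX).
  - intros A B f. unfold uu'. rdsimp. rewrite !Gumor, !(cat_idr _ K). symmetry. apply (R1 _ HX).
  - intros A B f. unfold uu'. rdsimp. rewrite Gumor, (cat_idr _ K), (cat_idl _ K). reflexivity.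
Qed.

Lemma vv_RNT (X : RData) (HX : isRC X) : isRNT (vv X HX) /\ isNat (vv X HX).
Proof.
  split; [split|].
  - intros M. destruct (TObj_norm HX M) as [A ->]. unfold rtotal. rdsimp.
    rewrite vv_uob. apply (Rrst_Ridm (LD_isLC X HX)).
  - intros M N x. destruct (TObj_norm HX M) as [A ->]. destruct (TObj_norm HX N) as [B ->].
    rdsimp. rewrite !vv_uob, umorG, !Rcmp_id_r'. symmetry. apply R1'.
  - intros M N x. destruct (TObj_norm HX M) as [A ->]. destruct (TObj_norm HX N) as [B ->].
    rdsimp. rewrite !vv_uob, umorG, Rcmp_id_r', Rcmp_id_l'. reflexivity.
Qed.

Lemma vv'_RNT (X : RData) (HX : isRC X) : isRNT (vv' X HX) /\ isNat (vv' X HX).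
Proof.
  split; [split|].
  - intros M. destruct (TObj_norm HX M) as [A ->]. unfold rtotal. rdsimp.
    rewrite vv'_uob. apply (Rrst_Ridm (LD_isLC X HX)).
  - intros M N x. destruct (TObj_norm HX M) as [A ->]. destruct (TObj_norm HX N) as [B ->].
    rdsimp. rewrite !vv'_uob, !umorG, !Rcmp_id_r'. symmetry. apply R1'.
  - intros M N x. destruct (TObj_norm HX M) as [A ->]. destruct (TObj_norm HX N) as [B ->].
    rdsimp. rewrite !vv'_uob, umorG, Rcmp_id_r', Rcmp_id_l'. reflexivity.
Qed.

Lemma U_inv (X : RData) (HX : isRC X) :
  vcomp (uu X HX) (uu' X HX) = ntid (fid X) /\ vcomp (uu' X HX) (uu X HX) = ntid (fcomp (Ufun X HX) (Gfun X HX)) /\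
  vcomp (vv X HX) (vv' X HX) = ntid (fid _) /\ vcomp (vv' X HX) (vv X HX) = ntid (fcomp (Gfun X HX) (Ufun X HX)).
Proof.
  pose proof (rc_cat _ HX) as K. repeat split.
  - apply functional_extensionality_dep. intros A. unfold vcomp, uu, uu', ntid. apply (cat_idl _ K).
  - apply functional_extensionality_dep. intros A. unfold vcomp, uu, uu', ntid. apply (cat_idl _ K).
  - apply functional_extensionality_dep. intros M. destruct (TObj_norm HX M) as [A ->].
    unfold vcomp, ntid. rdsimp. rewrite vv_uob, vv'_uob. apply Rcmp_id_l'.
  - apply functional_extensionality_dep. intros M. destruct (TObj_norm HX M) as [A ->].
    unfold vcomp, ntid. rdsimp. rewrite vv_uob, vv'_uob. apply Rcmp_id_l'.
Qed.

Lemma U_equiv (X : RData) (HX : isRC X) :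
  rc_equiv (@isRNT) (Ufun X HX) /\ rc_equiv (@isRTotNT) (Ufun X HX).
Proof.
  destruct (uu_RNT X HX) as [A1 A2]. destruct (uu'_RNT X HX) as [B1 B2].
  destruct (vv_RNT X HX) as [C1 C2]. destruct (vv'_RNT X HX) as [D1 D2].
  destruct (U_inv X HX) as [E1 [E2 [E3 E4]]].
  split; exists (Gfun X HX); (split; [apply Gfun_isRFunctor|]);
    exists (uu X HX), (uu' X HX), (vv X HX), (vv' X HX); unfold isRTotNT; tauto.
Qed.


Lemma U_feq (X Y : RData) (HX : isRC X) (HY : isRC Y) (F : FData X Y) (HF : isRFunctor F) :
  feq (fcomp (Ufun X HX) (RF (LD_isLC X HX) (LD_isLC Y HY) (LF_isLFunctor X Y HX HY F HF)))
      (fcomp F (Ufun Y HY)).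
Proof.
  pose proof (proj1 HF) as FF. split.
  - intros A. apply TObj_ext. simpl. unfold LF_ob. simpl. apply LObj_ext. apply (f_id _ FF).
  - intros A B f. cbn [fm fo fcomp Ufun RF]. unfold umor.
    rewrite (RF_cls (LD_isLC X HX) (LD_isLC Y HY)).
    apply JMeq_cls.
    + simpl. unfold LF_ob. simpl. apply LObj_ext. apply (f_id _ FF).
    + simpl. unfold LF_ob. simpl. apply LObj_ext. apply (f_id _ FF).
    + simpl. unfold LF_ob. simpl. apply LObj_ext. apply (proj2 HF).
    + simpl. apply LHom_JMeq.
      * unfold LF_ob. simpl. apply LObj_ext. apply (proj2 HF).
      * unfold LF_ob. simpl. apply LObj_ext. apply (f_id _ FF).
      * simpl. reflexivity.
Qed.

Lemma U_nteq (X Y : RData) (HX : isRC X) (HY : isRC Y) (F G : FData X Y)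
  (HF : isRFunctor F) (HG : isRFunctor G) (a : NT F G) (Ha : isRNT a) :
  nteq (whiskL (Ufun X HX) (RN (LD_isLC X HX) (LD_isLC Y HY) (LF_isLFunctor X Y HX HY F HF)
                               (LF_isLFunctor X Y HX HY G HG) (LN HX HY HF HG Ha)))
       (whiskR a (Ufun Y HY)).
Proof.
  pose proof (proj1 HF) as FF. pose proof (proj1 HG) as GG. pose proof (rc_cat _ HY) as KY.
  intros A. unfold whiskL, whiskR, RN. cbn [fm fo Ufun]. unfold umor.
  apply JMeq_cls.
  - simpl. unfold LF_ob. simpl. apply LObj_ext. apply (f_id _ FF).
  - simpl. unfold LF_ob. simpl. apply LObj_ext. apply (f_id _ GG).
  - simpl. unfold LF_ob. simpl. apply LObj_ext. rewrite (f_id _ FF). symmetry. apply (proj1 Ha A).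
  - simpl. apply LHom_JMeq.
    + unfold LF_ob. simpl. apply LObj_ext. rewrite (f_id _ FF). symmetry. apply (proj1 Ha A).
    + unfold LF_ob. simpl. apply LObj_ext. apply (f_id _ GG).
    + simpl. rewrite (f_id _ FF), (cat_idl _ KY). reflexivity.
Qed.


Lemma assoc_cancel {C : Cat} (HC : isCat C) {A B E : C} (f : hom A B) (g : hom B E) (h : hom E B) :
  g ;; h = idm B -> (f ;; g) ;; h = f.
Proof. intros H. rewrite (cat_assoc _ HC), H. apply (cat_idr _ HC). Qed.

Lemma sandwich_cancel {C : Cat} (HC : isCat C) {A A' B B' : C} (a : hom A A') (b : hom A' A)
  (y : hom A B) (c : hom B B') (d : hom B' B) :
  a ;; b = idm A -> c ;; d = idm B -> (a ;; ((b ;; y) ;; c)) ;; d = a ;; b ;; y.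
Proof.
  intros H1 H2. rewrite !(cat_assoc _ HC), H2, (cat_idr _ HC). reflexivity.
Qed.

Lemma nat_inv {C D : Cat} (HD : isCat D) {F G : FData C D} (u : NT F G) (u' : NT G F) :
  isNat u -> (forall A, u A ;; u' A = idm _) -> (forall A, u' A ;; u A = idm _) -> isNat u'.
Proof.
  intros Hu H1 H2 A B f.
  transitivity (u' A ;; (u A ;; fm G f) ;; u' B).
  - rewrite <- (cat_assoc _ HD), H2, (cat_idl _ HD). reflexivity.
  - rewrite <- (Hu _ _ f), !(cat_assoc _ HD), H1, (cat_idr _ HD). reflexivity.
Qed.

Lemma iso_nat_pb {C D : Cat} (HD : isCat D) {F G : FData C D} (a : NT F G) (b : NT G F)
  {M LM : C} (h : hom M LM) :
  fm F h ;; a LM = a M ;; fm G h -> isIso (a M) (b M) -> isIso (a LM) (b LM) ->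
  is_pullback (a M) (fm F h) (fm G h) (a LM).
Proof.
  intros Hn [HM1 HM2] [HL1 HL2].
  assert (Hb : b M ;; fm F h = fm G h ;; b LM).
  { transitivity (b M ;; (fm F h ;; a LM) ;; b LM).
    - rewrite !(cat_assoc _ HD), HL1, (cat_idr _ HD). reflexivity.
    - rewrite Hn, <- !(cat_assoc _ HD), HM2, (cat_idl _ HD). reflexivity. }
  split; [symmetry; exact Hn|].
  intros Q q1 q2 Hq. exists (q1 ;; b M). split.
  - split.
    + rewrite (cat_assoc _ HD), HM2, (cat_idr _ HD). reflexivity.
    + rewrite (cat_assoc _ HD), Hb, <- (cat_assoc _ HD), Hq, (cat_assoc _ HD), HL1, (cat_idr _ HD).
      reflexivity.
  - intros u' [H1 _]. rewrite <- H1, (cat_assoc _ HD), HM1, (cat_idr _ HD). reflexivity.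
Qed.

Lemma equiv_faithful {C D : Cat} (HC : isCat C) {F : FData C D} {G : FData D C}
  (u : NT (fid C) (fcomp F G)) (u' : NT (fcomp F G) (fid C)) :
  isNat u -> (forall A, u A ;; u' A = idm _) ->
  forall (A B : C) (h k : hom A B), fm F h = fm F k -> h = k.
Proof.
  intros Hu H1 A B h k E.
  assert (Eh : forall x : hom A B, x = u A ;; fm G (fm F x) ;; u' B).
  { intros x. pose proof (Hu _ _ x) as Hx.
    transitivity ((x ;; u B) ;; u' B).
    - cbn [fid fcomp fo fm] in *. rewrite (cat_assoc _ HC), H1, (cat_idr _ HC). reflexivity.
    - f_equal. exact Hx. }
  rewrite (Eh h), (Eh k), E. reflexivity.
Qed.

Lemma equiv_full {C D : Cat} (HC : isCat C) (HD : isCat D) {F : FData C D} {G : FData D C}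
  (FF : isFunctor F) (GF : isFunctor G)
  (u : NT (fid C) (fcomp F G)) (u' : NT (fcomp F G) (fid C))
  (v : NT (fid D) (fcomp G F)) (v' : NT (fcomp G F) (fid D)) :
  isNat u -> isNat u' -> isNat v -> (forall A, u A ;; u' A = idm _) -> (forall A, u' A ;; u A = idm _) ->
  (forall A, v A ;; v' A = idm _) ->
  forall (A B : C) (y : hom (F A) (F B)), fm F (u A ;; fm G y ;; u' B) = y.
Proof.
  intros Hu Hu' Hv H1 H2 H3 A B y.
  apply (equiv_faithful HD (F := G) (G := F) v v' Hv H3).
  pose proof (Hu' _ _ (u A ;; fm G y ;; u' B)) as E.
  transitivity (u' A ;; (u A ;; fm G y ;; u' B) ;; u B).
  - transitivity ((fm G (fm F (u A ;; fm G y ;; u' B)) ;; u' B) ;; u B).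
    + symmetry. apply (assoc_cancel HC). apply H2.
    + apply (f_equal (fun z => z ;; u B)). exact E.
  - rewrite (sandwich_cancel HC); [| apply H2 | apply H2]. cbn [fid fcomp fo fm] in *.
    rewrite H2. apply (cat_idl _ HC).
Qed.

Lemma equiv_pres_pb {C D : Cat} (HC : isCat C) (HD : isCat D) {F : FData C D} {G : FData D C}
  (FF : isFunctor F) (GF : isFunctor G)
  (u : NT (fid C) (fcomp F G)) (u' : NT (fcomp F G) (fid C))
  (v : NT (fid D) (fcomp G F)) (v' : NT (fcomp G F) (fid D)) :
  isNat u -> isNat u' -> isNat v -> (forall A, u A ;; u' A = idm _) -> (forall A, u' A ;; u A = idm _) ->
  (forall A, v A ;; v' A = idm _) -> (forall A, v' A ;; v A = idm _) ->
  forall (P A B E : C) (p1 : hom P A) (p2 : hom P B) (f : hom A E) (g : hom B E),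
    is_pullback p1 p2 f g -> is_pullback (fm F p1) (fm F p2) (fm F f) (fm F g).
Proof.
  intros Hu Hu' Hv H1 H2 H3 H4 P A B E p1 p2 f g [Hc Hp]. cbn [fid fcomp fo fm] in *.
  pose proof (equiv_faithful HC u u' Hu H1) as Fa.
  pose proof (equiv_full HC HD FF GF u u' v v' Hu Hu' Hv H1 H2 H3) as Fu.
  split.
  - rewrite <- !(f_cmp _ FF), Hc. reflexivity.
  - intros Q q1 q2 Hq.
    set (r1 := u (G Q) ;; fm G (v' Q ;; q1) ;; u' A).
    set (r2 := u (G Q) ;; fm G (v' Q ;; q2) ;; u' B).
    assert (Er1 : fm F r1 = v' Q ;; q1) by apply Fu.
    assert (Er2 : fm F r2 = v' Q ;; q2) by apply Fu. cbn [fid fcomp fo fm] in *.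
    assert (Er : r1 ;; f = r2 ;; g).
    { apply Fa. rewrite !(f_cmp _ FF), Er1, Er2, !(cat_assoc _ HD), Hq. reflexivity. }
    destruct (Hp _ _ _ Er) as [w [[Hw1 Hw2] Hwu]].
    exists (v Q ;; fm F w). cbn [fid fcomp fo fm] in *. split.
    + split.
      * rewrite (cat_assoc _ HD), <- (f_cmp _ FF), Hw1, Er1, <- (cat_assoc _ HD), H3, (cat_idl _ HD).
        reflexivity.
      * rewrite (cat_assoc _ HD), <- (f_cmp _ FF), Hw2, Er2, <- (cat_assoc _ HD), H3, (cat_idl _ HD).
        reflexivity.
    + intros z [Hz1 Hz2].
      set (w' := u (G Q) ;; fm G (v' Q ;; z) ;; u' P).
      assert (Ew' : fm F w' = v' Q ;; z) by apply Fu. cbn [fid fcomp fo fm] in *.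
      assert (Ww : w = w').
      { apply Hwu. split.
        - apply Fa. rewrite (f_cmp _ FF), Ew', Er1, (cat_assoc _ HD), Hz1. reflexivity.
        - apply Fa. rewrite (f_cmp _ FF), Ew', Er2, (cat_assoc _ HD), Hz2. reflexivity. }
      rewrite Ww, Ew', <- (cat_assoc _ HD), H3, (cat_idl _ HD). reflexivity.
Qed.


Definition LT {C : LData} (HC : isLC C) (M : C) : TObj C :=
  mkTObj (Lo M) (L1a _ HC M) (L1b _ HC M).

Definition aspan {C : LData} (M : C) : Span C (Lo M) (Lo M) :=
  @mkSpan C (Lo M) (Lo M) M eq_refl (eta M).

Lemma aM_ok {C : LData} (HC : isLC C) (M : C) :
  @rst (RD C HC) (LT HC M) (LT HC M) (cls (aspan M)) = cls (aspan M).
Proof. simpl. rewrite (Rrst_cls HC). reflexivity. Qed.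

Definition vob {C : LData} (HC : isLC C) (M : C) : LObj (RD C HC) :=
  mkLObj (X := RD C HC) (LT HC M) (cls (aspan M)) (aM_ok HC M).

Definition vspan {C : LData} {M N : C} (f : hom M N) : Span C (Lo M) (Lo N) :=
  @mkSpan C (Lo M) (Lo N) M eq_refl (f ;; eta N).

Lemma vmor_r {C : LData} (HC : isLC C) {M N : C} (f : hom M N) :
  @rst (RD C HC) (LT HC M) (LT HC N) (cls (vspan f)) = lo_id (vob HC M).
Proof. simpl. rewrite (Rrst_cls HC). reflexivity. Qed.

Lemma vmor_c {C : LData} (HC : isLC C) {M N : C} (f : hom M N) :
  @cmp (RD C HC) (LT HC M) (LT HC N) (LT HC N) (cls (vspan f)) (lo_id (vob HC N)) = cls (vspan f).
Proof.
  pose proof (lc_cat _ HC) as K. simpl.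
  rewrite (Rcmp_char HC (vspan f) (aspan N) M eq_refl (idm _) f).
  - reflexivity.
  - apply pb_monic; auto. apply (L2 _ HC).
  - simpl. apply (cat_idl _ K).
Qed.

Definition vmor {C : LData} (HC : isLC C) {M N : C} (f : hom M N)
  : LHom (RD C HC) (vob HC M) (vob HC N) :=
  mkLHom (X := RD C HC) (x := vob HC M) (y := vob HC N) (cls (vspan f)) (vmor_r HC f) (vmor_c HC f).

Definition vfun (C : LData) (HC : isLC C) : FData C (LD (RD C HC) (RD_isRC HC)) :=
  @mkF C (LD (RD C HC) (RD_isRC HC)) (vob HC) (fun M N f => vmor HC f).

Lemma ex_dec (P : Prop) : exists b : bool, if b then P else ~ P.
Proof. destruct (classic P); [exists true | exists false]; auto. Qed.

Definition pdec (P : Prop) : {P} + {~ P} :=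
  let (b, H) := constructive_indefinite_description _ (ex_dec P) in
  (match b return (if b then P else ~ P) -> {P} + {~ P} with
   | true => fun h => left h
   | false => fun h => right h end) H.

Definition Gsp {C : LData} (HC : isLC C) (x : LObj (RD C HC))
  : Span C (to_ob (lo_ob x)) (to_ob (lo_ob x)) :=
  if pdec (lo_id x = Ridm (lo_ob x))
  then mkSpan (to_ob (lo_ob x)) (to_eq (lo_ob x)) (idm _)
  else rep (lo_id x).

Definition Gob {C : LData} (HC : isLC C) (x : LObj (RD C HC)) : C := sp_ob (Gsp HC x).
Definition GE {C : LData} (HC : isLC C) (x : LObj (RD C HC)) : hom (Gob HC x) (to_ob (lo_ob x)) :=
  Ep (Gsp HC x).

Lemma GspP {C : LData} (HC : isLC C) (x : LObj (RD C HC)) :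
  lo_id x = cls (mkSpan (Gob HC x) (sp_eq (Gsp HC x)) (GE HC x)).
Proof.
  unfold Gob, GE, Gsp. destruct (pdec _) as [H|H].
  - rewrite H. unfold Ridm. apply f_equal, span_ext. symmetry. apply (to_eta (lo_ob x)).
  - transitivity (Rrst (lo_id x)); [symmetry; exact (lo_ok x) | reflexivity].
Qed.

Lemma GE_monic {C : LData} (HC : isLC C) (x : LObj (RD C HC)) : monic (GE HC x).
Proof. apply Ep_monic; auto. Qed.

Definition GS {C : LData} (HC : isLC C) (x x' : LObj (RD C HC)) (t : hom (Gob HC x) (Gob HC x'))
  : Span C (to_ob (lo_ob x)) (to_ob (lo_ob x')) :=
  mkSpan (Gob HC x) (sp_eq (Gsp HC x)) (t ;; GE HC x').

Lemma Gmor_ex {C : LData} (HC : isLC C) {x x' : LObj (RD C HC)} (y : LHom (RD C HC) x x') :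
  exists t : hom (Gob HC x) (Gob HC x'), cls (GS HC x x' t) = lh y.
Proof.
  pose proof (lc_cat _ HC) as K.
  pose proof (lh_r y) as H1. pose proof (lh_c y) as H2. simpl in H1, H2.
  rewrite <- (cls_rep (lh y)) in H1, H2 |- *. set (p := rep (lh y)) in *.
  rewrite (Rrst_cls HC), (GspP HC x) in H1. apply cls_inj in H1; auto.
  destruct H1 as [al [phi [[Ha1 Ha2] [Ha3 Ha4]]]]. simpl in Ha3, Ha4.
  rewrite (GspP HC x') in H2.
  destruct (pb_span_exists HC p (mkSpan (Gob HC x') (sp_eq (Gsp HC x')) (GE HC x')))
    as [W [eW [m [k [Hpb Hm]]]]].
  rewrite (Rcmp_char HC _ _ W eW m k Hpb Hm) in H2. apply cls_inj in H2; auto.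
  apply sp_iso'_sym in H2; auto.
  destruct H2 as [psi [psi' [_ [Hp1 Hp2]]]]. simpl in Hp1, Hp2.
  exists (phi ;; psi ;; k). apply cls_eq; auto.
  change (al ;; GE HC x = Ep p) in Ha3.
  change (psi ;; (k ;; GE HC x') = sp_mor p) in Hp2.
  exists phi, al. repeat split; auto.
  - change (phi ;; Ep p = GE HC x). rewrite <- Ha3, <- (cat_assoc _ K), Ha2. apply (cat_idl _ K).
  - change (phi ;; sp_mor p = ((phi ;; psi) ;; k) ;; GE HC x'). rewrite <- Hp2, !(cat_assoc _ K).
    reflexivity.
Qed.


Definition Gmor' {C : LData} (HC : isLC C) {x x' : LObj (RD C HC)} (y : LHom (RD C HC) x x')
  : hom (Gob HC x) (Gob HC x') := proj1_sig (constructive_indefinite_description _ (Gmor_ex HC y)).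

Lemma GmorP {C : LData} (HC : isLC C) {x x' : LObj (RD C HC)} (y : LHom (RD C HC) x x') :
  cls (GS HC x x' (Gmor' HC y)) = lh y.
Proof. unfold Gmor'. destruct (constructive_indefinite_description _ _) as [t Ht]. exact Ht. Qed.

Lemma Gmor_uniq {C : LData} (HC : isLC C) {x x' : LObj (RD C HC)} (y : LHom (RD C HC) x x')
  (t : hom (Gob HC x) (Gob HC x')) : cls (GS HC x x' t) = lh y -> t = Gmor' HC y.
Proof.
  pose proof (lc_cat _ HC) as K.
  intros H. rewrite <- (GmorP HC y) in H. apply cls_inj in H; auto.
  destruct H as [chi [chi' [_ [H1 H2]]]].
  change (hom (Gob HC x) (Gob HC x)) in chi.
  change (chi ;; GE HC x = GE HC x) in H1.
  change (chi ;; (Gmor' HC y ;; GE HC x') = t ;; GE HC x') in H2.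
  assert (Hc : chi = idm _).
  { apply (GE_monic HC x). rewrite H1, (cat_idl _ K). reflexivity. }
  rewrite Hc, (cat_idl _ K) in H2. apply (GE_monic HC x'). symmetry. exact H2.
Qed.

Definition Gfun' (C : LData) (HC : isLC C) : FData (LD (RD C HC) (RD_isRC HC)) C :=
  @mkF (LD (RD C HC) (RD_isRC HC)) C (Gob HC) (fun x x' y => Gmor' HC y).

Lemma Gfun'_isFunctor (C : LData) (HC : isLC C) : isFunctor (Gfun' C HC).
Proof.
  pose proof (lc_cat _ HC) as K. split.
  - intros x. simpl. symmetry. apply Gmor_uniq. simpl. rewrite (GspP HC x). unfold GS.
    apply f_equal, span_ext. apply (cat_idl _ K).
  - intros x x' x'' y z. simpl. symmetry. apply Gmor_uniq. simpl.
    rewrite <- (GmorP HC y), <- (GmorP HC z).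
    rewrite (Rcmp_char HC (GS HC x x' (Gmor' HC y)) (GS HC x' x'' (Gmor' HC z)) (Gob HC x)
               (sp_eq (Gsp HC x)) (idm _) (Gmor' HC y)).
    + unfold GS. apply f_equal, span_ext. apply (cat_assoc _ K).
    + apply pb_monic; auto. apply GE_monic.
    + apply (cat_idl _ K).
Qed.

Lemma GspLo {C : LData} (HC : isLC C) (x : LObj (RD C HC)) :
  Gsp HC (Lo_L (RD_isRC HC) x) = mkSpan (to_ob (lo_ob x)) (to_eq (lo_ob x)) (idm _).
Proof.
  unfold Gsp. destruct (pdec _) as [H|H].
  - reflexivity.
  - exfalso. apply H. reflexivity.
Qed.

Definition GobLo {C : LData} (HC : isLC C) (x : LObj (RD C HC)) :
  Gob HC (Lo_L (RD_isRC HC) x) = to_ob (lo_ob x) :=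
  f_equal (@sp_ob C _ _) (GspLo HC x).

Lemma Ep_id_tr {C : LData} (HC : isLC C) (M : TObj C) (s : Span C (to_ob M) (to_ob M))
  (E0 : s = mkSpan (to_ob M) (to_eq M) (idm _)) {U : C} (t : hom U (sp_ob s)) :
  t ;; Ep s = tr (f_equal (@sp_ob C _ _) E0) t.
Proof.
  subst s. simpl. rewrite Ep_Ridm. apply (cat_idr _ (lc_cat _ HC)).
Qed.

Definition G_lf_obj {C : LData} (HC : isLC C) (x : LObj (RD C HC)) :
  Gob HC (Lo_L (RD_isRC HC) x) = Lo (Gob HC x) :=
  eq_trans (GobLo HC x) (eq_sym (sp_eq (Gsp HC x))).

Lemma G_lf_eta {C : LData} (HC : isLC C) (x : LObj (RD C HC)) :
  tr (G_lf_obj HC x) (Gmor' HC (eta_L (RD_isRC HC) x)) = eta (Gob HC x).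
Proof.
  pose proof (lc_cat _ HC) as K.
  assert (H1 : Gmor' HC (eta_L (RD_isRC HC) x) ;; GE HC (Lo_L (RD_isRC HC) x) = GE HC x).
  { pose proof (GmorP HC (eta_L (RD_isRC HC) x)) as H. simpl in H.
    rewrite (GspP HC x) in H. apply cls_inj in H; auto.
    destruct H as [chi [chi' [_ [H1 H2]]]].
    change (hom (Gob HC x) (Gob HC x)) in chi.
    change (chi ;; GE HC x = GE HC x) in H1.
    change (chi ;; GE HC x = Gmor' HC (eta_L (RD_isRC HC) x) ;; GE HC (Lo_L (RD_isRC HC) x)) in H2.
    rewrite <- H2. exact H1. }
  unfold G_lf_obj. rewrite <- tr_tr. unfold GobLo.
  rewrite <- (Ep_id_tr HC (lo_ob x) _ (GspLo HC x)).
  change (tr (eq_sym (sp_eq (Gsp HC x))) (Gmor' HC (eta_L (RD_isRC HC) x) ;; GE HC (Lo_L (RD_isRC HC) x)) = eta (Gob HC x)).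
  rewrite H1. unfold GE, Ep. apply tr_sym_l.
Qed.


Lemma vfun_isFunctor (C : LData) (HC : isLC C) : isFunctor (vfun C HC).
Proof.
  pose proof (lc_cat _ HC) as K. split.
  - intros M. apply LHom_ext. simpl. unfold vspan, aspan. apply f_equal, span_ext.
    apply (cat_idl _ K).
  - intros M N P f g. apply LHom_ext. simpl.
    rewrite (Rcmp_char HC (vspan f) (vspan g) M eq_refl (idm _) f).
    + unfold vspan. simpl. apply f_equal, span_ext. apply (cat_assoc _ K).
    + apply pb_monic; auto. apply (L2 _ HC).
    + apply (cat_idl _ K).
Qed.

Lemma LObj_ext2 {X : RData} (A B : X) (e : A = B) (a : hom A A) (b : hom B B)
  (ha : rst a = a) (hb : rst b = b) : JMeq a b -> mkLObj A a ha = mkLObj B b hb.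
Proof. subst B. intros H. apply JMeq_eq in H. subst b. f_equal. apply proof_irrelevance. Qed.

Lemma JMeq_eta_LM {C : LData} (HC : isLC C) (M : C) {Z : C} (h : hom Z (Lo M)) :
  JMeq (h ;; eta (Lo M)) h.
Proof.
  pose proof (L1b _ HC M) as H.
  assert (E : eta (Lo M) = tr (eq_sym (L1a _ HC M)) (idm (Lo M))).
  { rewrite <- H. symmetry. apply tr_sym_l. }
  rewrite E, <- tr_cmp, (cat_idr _ (lc_cat _ HC)). apply tr_JMeq.
Qed.

Lemma JMeq_eta_idm {C : LData} (HC : isLC C) (M : C) : JMeq (eta (Lo M)) (idm (Lo M)).
Proof.
  rewrite <- (L1b _ HC M). symmetry. apply tr_JMeq.
Qed.

Lemma v_lf_obj {C : LData} (HC : isLC C) (M : C) :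
  vob HC (Lo M) = Lo_L (RD_isRC HC) (vob HC M).
Proof.
  unfold vob, Lo_L. simpl. apply LObj_ext2.
  - apply TObj_ext. simpl. apply (L1a _ HC).
  - unfold Ridm, aspan. apply JMeq_cls.
    + apply (L1a _ HC).
    + apply (L1a _ HC).
    + reflexivity.
    + simpl. apply (JMeq_eta_idm HC).
Qed.

Lemma vfun_lf_eta {C : LData} (HC : isLC C) (M : C) :
  @tr (LD (RD C HC) (RD_isRC HC)) _ _ _ (v_lf_obj HC M) (fm (vfun C HC) (eta M)) = eta (vfun C HC M).
Proof.
  apply (LHom_tr (RD_isRC HC)). simpl. unfold vspan, aspan. apply JMeq_cls.
  - reflexivity.
  - apply (L1a _ HC).
  - reflexivity.
  - simpl. apply (JMeq_eta_LM HC).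
Qed.

Lemma uC_ex {C : LData} (HC : isLC C) (M : C) :
  exists pr : hom M (Gob HC (vob HC M)) * hom (Gob HC (vob HC M)) M,
    isIso (fst pr) (snd pr) /\ fst pr ;; GE HC (vob HC M) = eta M.
Proof.
  pose proof (GspP HC (vob HC M)) as H. simpl in H. apply cls_inj in H; auto.
  destruct H as [u [v [Huv [H1 _]]]]. exists (u, v). simpl. split; auto.
Qed.

Definition uC (C : LData) (HC : isLC C) : NT (fid C) (fcomp (vfun C HC) (Gfun' C HC)) :=
  fun M => fst (proj1_sig (constructive_indefinite_description _ (uC_ex HC M))).
Definition uC' (C : LData) (HC : isLC C) : NT (fcomp (vfun C HC) (Gfun' C HC)) (fid C) :=
  fun M => snd (proj1_sig (constructive_indefinite_description _ (uC_ex HC M))).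

Lemma uC_prop {C : LData} (HC : isLC C) (M : C) :
  isIso (uC C HC M) (uC' C HC M) /\ uC C HC M ;; GE HC (vob HC M) = eta M.
Proof.
  unfold uC, uC'. destruct (constructive_indefinite_description _ _) as [pr H]. exact H.
Qed.

Lemma uC'_E {C : LData} (HC : isLC C) (M : C) : uC' C HC M ;; eta M = GE HC (vob HC M).
Proof.
  destruct (uC_prop HC M) as [[_ H2] H3]. rewrite <- H3, <- (cat_assoc _ (lc_cat _ HC)).
  change (uC' C HC M ;; uC C HC M) with (uC' C HC M ;; uC C HC M). rewrite H2.
  apply (cat_idl _ (lc_cat _ HC)).
Qed.


Lemma Gv_mor {C : LData} (HC : isLC C) {M N : C} (f : hom M N) :
  Gmor' HC (vmor HC f) = uC' C HC M ;; f ;; uC C HC N.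
Proof.
  pose proof (lc_cat _ HC) as K. symmetry. apply Gmor_uniq. simpl. apply cls_eq; auto.
  destruct (uC_prop HC M) as [[HM1 HM2] HM3]. destruct (uC_prop HC N) as [_ HN3].
  exists (uC' C HC M), (uC C HC M). split; [split; auto|]. split.
  - change (uC' C HC M ;; eta M = GE HC (vob HC M)). apply uC'_E.
  - change (uC' C HC M ;; (f ;; eta N) = (uC' C HC M ;; f ;; uC C HC N) ;; GE HC (vob HC N)).
    rewrite <- HN3, !(cat_assoc _ K). reflexivity.
Qed.

Lemma uC_nat (C : LData) (HC : isLC C) : isNat (uC C HC).
Proof.
  pose proof (lc_cat _ HC) as K. intros M N f. cbn [fm fid fcomp vfun Gfun'].
  etransitivity; [|apply (f_equal (fun z => uC C HC M ;; z)); symmetry; apply Gv_mor]. destruct (uC_prop HC M) as [[HM1 HM2] HM3].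
  rewrite <- !(cat_assoc _ K), HM1, (cat_idl _ K). reflexivity.
Qed.

Lemma uC_iso1 (C : LData) (HC : isLC C) (M : C) : uC C HC M ;; uC' C HC M = idm _.
Proof. apply (uC_prop HC M). Qed.
Lemma uC_iso2 (C : LData) (HC : isLC C) (M : C) : uC' C HC M ;; uC C HC M = idm _.
Proof. apply (uC_prop HC M). Qed.

Lemma uC'_nat (C : LData) (HC : isLC C) : isNat (uC' C HC).
Proof.
  apply (nat_inv (lc_cat _ HC) (uC C HC)); [apply uC_nat | apply uC_iso1 | apply uC_iso2].
Qed.

Definition wspan {C : LData} (HC : isLC C) (x : LObj (RD C HC))
  : Span C (to_ob (lo_ob x)) (Lo (Gob HC x)) :=
  @mkSpan C (to_ob (lo_ob x)) (Lo (Gob HC x)) (Gob HC x) (sp_eq (Gsp HC x)) (eta (Gob HC x)).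
Definition w'span {C : LData} (HC : isLC C) (x : LObj (RD C HC))
  : Span C (Lo (Gob HC x)) (to_ob (lo_ob x)) :=
  @mkSpan C (Lo (Gob HC x)) (to_ob (lo_ob x)) (Gob HC x) eq_refl (GE HC x).

Lemma pb_eta_id {C : LData} (HC : isLC C) {A B : C} (g : hom A B) :
  monic g -> is_pullback (idm A) (idm A) g g.
Proof.
  intros Hg. pose proof (pb_monic (lc_cat _ HC) (idm A) g Hg) as H.
  rewrite (cat_idl _ (lc_cat _ HC)) in H. exact H.
Qed.

Lemma wD_r {C : LData} (HC : isLC C) (x : LObj (RD C HC)) :
  @rst (RD C HC) (lo_ob x) (LT HC (Gob HC x)) (cls (wspan HC x)) = lo_id x.
Proof. simpl. rewrite (Rrst_cls HC), (GspP HC x). reflexivity. Qed.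

Lemma wD_c {C : LData} (HC : isLC C) (x : LObj (RD C HC)) :
  @cmp (RD C HC) (lo_ob x) (LT HC (Gob HC x)) (LT HC (Gob HC x)) (cls (wspan HC x))
    (lo_id (vob HC (Gob HC x))) = cls (wspan HC x).
Proof.
  pose proof (lc_cat _ HC) as K. simpl.
  rewrite (Rcmp_char HC (wspan HC x) (aspan (Gob HC x)) (Gob HC x) (sp_eq (Gsp HC x)) (idm _) (idm _)).
  - unfold wspan. simpl. apply f_equal, span_ext. apply (cat_idl _ K).
  - apply pb_eta_id; auto. apply (L2 _ HC).
  - apply (cat_idl _ K).
Qed.

Lemma wD'_r {C : LData} (HC : isLC C) (x : LObj (RD C HC)) :
  @rst (RD C HC) (LT HC (Gob HC x)) (lo_ob x) (cls (w'span HC x)) = lo_id (vob HC (Gob HC x)).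
Proof. simpl. rewrite (Rrst_cls HC). reflexivity. Qed.

Lemma wD'_c {C : LData} (HC : isLC C) (x : LObj (RD C HC)) :
  @cmp (RD C HC) (LT HC (Gob HC x)) (lo_ob x) (lo_ob x) (cls (w'span HC x)) (lo_id x)
    = cls (w'span HC x).
Proof.
  pose proof (lc_cat _ HC) as K. simpl. rewrite (GspP HC x).
  rewrite (Rcmp_char HC (w'span HC x) (mkSpan (Gob HC x) (sp_eq (Gsp HC x)) (GE HC x))
             (Gob HC x) eq_refl (idm _) (idm _)).
  - unfold w'span. simpl. apply f_equal, span_ext. apply (cat_idl _ K).
  - apply pb_eta_id; auto. apply GE_monic.
  - apply (cat_idl _ K).
Qed.

Definition wD (C : LData) (HC : isLC C) : NT (fid (LD (RD C HC) (RD_isRC HC))) (fcomp (Gfun' C HC) (vfun C HC)) :=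
  fun x => mkLHom (X := RD C HC) (x := x) (y := vob HC (Gob HC x)) (cls (wspan HC x)) (wD_r HC x) (wD_c HC x).
Definition wD' (C : LData) (HC : isLC C) : NT (fcomp (Gfun' C HC) (vfun C HC)) (fid (LD (RD C HC) (RD_isRC HC))) :=
  fun x => mkLHom (X := RD C HC) (x := vob HC (Gob HC x)) (y := x) (cls (w'span HC x)) (wD'_r HC x) (wD'_c HC x).

Lemma wD_iso1 (C : LData) (HC : isLC C) (x : LObj (RD C HC)) :
  @cmp (LD (RD C HC) (RD_isRC HC)) _ _ _ (wD C HC x) (wD' C HC x) = idm _.
Proof.
  pose proof (lc_cat _ HC) as K. apply LHom_ext. simpl.
  rewrite (Rcmp_char HC (wspan HC x) (w'span HC x) (Gob HC x) (sp_eq (Gsp HC x)) (idm _) (idm _)).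
  - rewrite (GspP HC x). unfold w'span. simpl. apply f_equal, span_ext. apply (cat_idl _ K).
  - apply pb_eta_id; auto. apply (L2 _ HC).
  - apply (cat_idl _ K).
Qed.

Lemma wD_iso2 (C : LData) (HC : isLC C) (x : LObj (RD C HC)) :
  @cmp (LD (RD C HC) (RD_isRC HC)) _ _ _ (wD' C HC x) (wD C HC x) = idm _.
Proof.
  pose proof (lc_cat _ HC) as K. apply LHom_ext. simpl.
  rewrite (Rcmp_char HC (w'span HC x) (wspan HC x) (Gob HC x) eq_refl (idm _) (idm _)).
  - unfold wspan, aspan. simpl. apply f_equal, span_ext. apply (cat_idl _ K).
  - apply pb_eta_id; auto. apply GE_monic.
  - apply (cat_idl _ K).
Qed.

Lemma wD_nat (C : LData) (HC : isLC C) : isNat (wD C HC).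
Proof.
  pose proof (lc_cat _ HC) as K. intros x x' y. apply LHom_ext. simpl.
  rewrite <- (GmorP HC y).
  rewrite (Rcmp_char HC (GS HC x x' (Gmor' HC y)) (wspan HC x') (Gob HC x) (sp_eq (Gsp HC x))
             (idm _) (Gmor' HC y)).
  - rewrite (Rcmp_char HC (wspan HC x) (vspan (Gmor' HC y)) (Gob HC x) (sp_eq (Gsp HC x))
               (idm _) (idm _)).
    + unfold vspan. simpl. apply f_equal, span_ext. symmetry. apply (cat_idl _ K).
    + apply pb_eta_id; auto. apply (L2 _ HC).
    + apply (cat_idl _ K).
  - apply pb_monic; auto. apply GE_monic.
  - apply (cat_idl _ K).
Qed.

Lemma wD'_nat (C : LData) (HC : isLC C) : isNat (wD' C HC).
Proof.
  apply (nat_inv (LD_isCat (RD_isRC HC)) (wD C HC)); [apply wD_nat | apply wD_iso1 | apply wD_iso2].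
Qed.


Lemma vfun_isLFunctor (C : LData) (HC : isLC C) : isLFunctor (vfun C HC).
Proof.
  refine {| lf_fun := vfun_isFunctor C HC; lf_obj := v_lf_obj HC; lf_eta := vfun_lf_eta HC; lf_pb := _ |}.
  intros M N P f p1 p2 H.
  apply (equiv_pres_pb (lc_cat _ HC) (LD_isCat (RD_isRC HC)) (vfun_isFunctor C HC)
           (Gfun'_isFunctor C HC) (uC C HC) (uC' C HC) (wD C HC) (wD' C HC));
    first [apply uC_nat | apply uC'_nat | apply wD_nat | apply wD'_nat | apply uC_iso1 | apply uC_iso2
          | apply wD_iso1 | apply wD_iso2 | exact H].
Qed.

Lemma Gfun'_isLFunctor (C : LData) (HC : isLC C) : isLFunctor (Gfun' C HC).
Proof.
  refine {| lf_fun := Gfun'_isFunctor C HC; lf_obj := G_lf_obj HC; lf_eta := G_lf_eta HC; lf_pb := _ |}.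
  intros M N P f p1 p2 H.
  apply (equiv_pres_pb (LD_isCat (RD_isRC HC)) (lc_cat _ HC) (Gfun'_isFunctor C HC)
           (vfun_isFunctor C HC) (wD C HC) (wD' C HC) (uC C HC) (uC' C HC));
    first [apply uC_nat | apply uC'_nat | apply wD_nat | apply wD'_nat | apply uC_iso1 | apply uC_iso2
          | apply wD_iso1 | apply wD_iso2 | exact H].
Qed.

Lemma V_equiv (C : LData) (HC : isLC C) :
  lc_equiv (@isLNT) (vfun C HC) /\ lc_equiv (@isLTotNT) (vfun C HC).
Proof.
  pose proof (lc_cat _ HC) as K. pose proof (LD_isCat (RD_isRC HC)) as KL.
  assert (E1 : vcomp (uC C HC) (uC' C HC) = ntid (fid C)).
  { apply functional_extensionality_dep. intros M. apply uC_iso1. }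
  assert (E2 : vcomp (uC' C HC) (uC C HC) = ntid (fcomp (vfun C HC) (Gfun' C HC))).
  { apply functional_extensionality_dep. intros M. apply uC_iso2. }
  assert (E3 : vcomp (wD C HC) (wD' C HC) = ntid (fid _)).
  { apply functional_extensionality_dep. intros M. apply wD_iso1. }
  assert (E4 : vcomp (wD' C HC) (wD C HC) = ntid (fcomp (Gfun' C HC) (vfun C HC))).
  { apply functional_extensionality_dep. intros M. apply wD_iso2. }
  assert (T1 : isLTotNT (uC C HC)).
  { split; [apply uC_nat|]. intros M. apply (iso_nat_pb K (uC C HC) (uC' C HC) (eta M)).
    - apply uC_nat.
    - split; [apply uC_iso1 | apply uC_iso2].
    - split; [apply uC_iso1 | apply uC_iso2]. }
  assert (T2 : isLTotNT (uC' C HC)).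
  { split; [apply uC'_nat|]. intros M. apply (iso_nat_pb K (uC' C HC) (uC C HC) (eta M)).
    - apply uC'_nat.
    - split; [apply uC_iso2 | apply uC_iso1].
    - split; [apply uC_iso2 | apply uC_iso1]. }
  assert (T3 : isLTotNT (wD C HC)).
  { split; [apply wD_nat|]. intros M. apply (iso_nat_pb KL (wD C HC) (wD' C HC) (eta M)).
    - apply wD_nat.
    - split; [apply wD_iso1 | apply wD_iso2].
    - split; [apply wD_iso1 | apply wD_iso2]. }
  assert (T4 : isLTotNT (wD' C HC)).
  { split; [apply wD'_nat|]. intros M. apply (iso_nat_pb KL (wD' C HC) (wD C HC) (eta M)).
    - apply wD'_nat.
    - split; [apply wD_iso2 | apply wD_iso1].
    - split; [apply wD_iso2 | apply wD_iso1]. }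
  split; exists (Gfun' C HC); (split; [apply Gfun'_isLFunctor|]);
    exists (uC C HC), (uC' C HC), (wD C HC), (wD' C HC).
  - unfold isLNT. split; [exact (proj1 T1)|]. split; [exact (proj1 T2)|].
    split; [exact (proj1 T3)|]. split; [exact (proj1 T4)|]. auto.
  - split; [exact T1|]. split; [exact T2|]. split; [exact T3|]. split; [exact T4|]. auto.
Qed.


Lemma eq_JMeq {A : Type} (x y : A) : x = y -> JMeq x y.
Proof. intros ->. reflexivity. Qed.

Lemma JMeq_cmp_tr {C : Cat} {A B Y Y' : C} (h : hom A B) (g : hom B Y) (e : Y = Y') :
  JMeq (h ;; g) (h ;; tr e g).
Proof. destruct e. reflexivity. Qed.

Lemma vF_ob {C D : LData} (HC : isLC C) (HD : isLC D) {F : FData C D} (HF : isLFunctor F) (M : C) :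
  LF_ob (RF_isRFunctor HC HD HF) (vob HC M) = vob HD (F M).
Proof.
  unfold LF_ob, vob. simpl. apply LObj_ext2.
  - apply TObj_ext. simpl. apply (lf_obj _ HF).
  - eapply JMeq_trans; [apply eq_JMeq; apply (RF_cls HC HD HF (aspan M))|].
    unfold aspan. apply JMeq_cls.
    + apply (lf_obj _ HF).
    + apply (lf_obj _ HF).
    + reflexivity.
    + simpl. rewrite <- (lf_eta _ HF M). symmetry. apply tr_JMeq.
Qed.

Lemma V_feq (C D : LData) (HC : isLC C) (HD : isLC D) (F : FData C D) (HF : isLFunctor F) :
  feq (fcomp (vfun C HC) (LF (RD_isRC HC) (RD_isRC HD) (RF_isRFunctor HC HD HF)))
      (fcomp F (vfun D HD)).
Proof.
  pose proof (lf_fun _ HF) as FF. split.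
  - intros M. apply vF_ob.
  - intros M N f. cbn [fm fo fcomp vfun LF]. apply LHom_JMeq.
    + apply vF_ob.
    + apply vF_ob.
    + simpl.
      eapply JMeq_trans; [apply eq_JMeq; apply (RF_cls HC HD HF (vspan f))|].
      unfold vspan. apply JMeq_cls.
      * apply (lf_obj _ HF).
      * apply (lf_obj _ HF).
      * reflexivity.
      * simpl. rewrite (f_cmp _ FF), <- (lf_eta _ HF N). apply JMeq_cmp_tr.
Qed.

Lemma V_nteq (C D : LData) (HC : isLC C) (HD : isLC D) (F G : FData C D)
  (HF : isLFunctor F) (HG : isLFunctor G) (a : NT F G) (Ha : isLNT a) :
  nteq (whiskL (vfun C HC) (LN (RD_isRC HC) (RD_isRC HD) (RF_isRFunctor HC HD HF)
                                (RF_isRFunctor HC HD HG) (hRN_proof C D HC HD F G HF HG a Ha)))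
       (whiskR a (vfun D HD)).
Proof.
  pose proof (lf_fun _ HF) as FF. pose proof (lc_cat _ HD) as KD.
  intros M. unfold whiskL, whiskR. cbn [fm fo vfun]. apply LHom_JMeq.
  - apply vF_ob.
  - apply vF_ob.
  - simpl.
    assert (E : Rcmp HD (cls (RF_span HF (rep (cls (aspan M))))) (RN HC HD HF HG a (LT HC M))
                = cls (mkSpan (F M) (sp_eq (RF_span HF (aspan M))) (a M ;; fm G (eta M)))).
    { rewrite (RF_cls HC HD HF (aspan M)). unfold RN.
      etransitivity; [apply (Rcmp_tot_r HD (RF_span HF (aspan M)) (RF_eq HF (LT HC M)) (a (to_ob (LT HC M)))
                 (RF_eta HF (LT HC M)))|].
      apply f_equal, span_ext. simpl. apply Ha. }
    eapply JMeq_trans; [apply eq_JMeq; exact E|].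
    unfold vspan. apply JMeq_cls.
    + apply (lf_obj _ HF).
    + apply (lf_obj _ HG).
    + reflexivity.
    + simpl. rewrite <- (lf_eta _ HG M). apply JMeq_cmp_tr.
Qed.


Theorem theorem4p19 :
  (* well-definedness of the 2-functors L_lax : RCat_lax -> LCat_lax and
     R_lax : LCat_lax -> RCat_lax on objects, 1-cells and 2-cells *)
  exists (hL : forall (X : RData) (HX : isRC X), isLC (LD X HX))
         (hR : forall (C : LData) (HC : isLC C), isRC (RD C HC))
         (hLF : forall (X Y : RData) (HX : isRC X) (HY : isRC Y)
                       (F : FData X Y) (HF : isRFunctor F), isLFunctor (LF HX HY HF))
         (hRF : forall (C D : LData) (HC : isLC C) (HD : isLC D)
                       (F : FData C D) (HF : isLFunctor F), isRFunctor (RF HC HD HF))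
         (hRN : forall (C D : LData) (HC : isLC C) (HD : isLC D) (F G : FData C D)
                       (HF : isLFunctor F) (HG : isLFunctor G) (a : NT F G),
                  isLNT a -> isRNT (RN HC HD HF HG a)),
    (forall (X Y : RData) (HX : isRC X) (HY : isRC Y) (F G : FData X Y)
            (HF : isRFunctor F) (HG : isRFunctor G) (a : NT F G) (Ha : isRNT a),
        isLNT (LN HX HY HF HG Ha)) /\
    (* the 2-equivalence RCat_lax ~ LCat_lax: unit 1 => R L *)
    (exists u : forall (X : RData) (HX : isRC X), FData X (RD (LD X HX) (hL X HX)),
      (forall X HX, isRFunctor (u X HX)) /\
      (forall (X Y : RData) (HX : isRC X) (HY : isRC Y) (F : FData X Y) (HF : isRFunctor F),
         feq (fcomp (u X HX) (RF (hL X HX) (hL Y HY) (hLF X Y HX HY F HF)))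
             (fcomp F (u Y HY))) /\
      (forall (X Y : RData) (HX : isRC X) (HY : isRC Y) (F G : FData X Y)
              (HF : isRFunctor F) (HG : isRFunctor G) (a : NT F G) (Ha : isRNT a),
         nteq (whiskL (u X HX) (RN (hL X HX) (hL Y HY) (hLF X Y HX HY F HF)
                                   (hLF X Y HX HY G HG) (LN HX HY HF HG Ha)))
              (whiskR a (u Y HY))) /\
      (forall X HX, rc_equiv (@isRNT) (u X HX)) /\
      (forall X HX, rc_equiv (@isRTotNT) (u X HX))) /\
    (* ... and 1 => L R *)
    (exists v : forall (C : LData) (HC : isLC C), FData C (LD (RD C HC) (hR C HC)),
      (forall C HC, isLFunctor (v C HC)) /\
      (forall (C D : LData) (HC : isLC C) (HD : isLC D) (F : FData C D) (HF : isLFunctor F),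
         feq (fcomp (v C HC) (LF (hR C HC) (hR D HD) (hRF C D HC HD F HF)))
             (fcomp F (v D HD))) /\
      (forall (C D : LData) (HC : isLC C) (HD : isLC D) (F G : FData C D)
              (HF : isLFunctor F) (HG : isLFunctor G) (a : NT F G) (Ha : isLNT a),
         nteq (whiskL (v C HC) (LN (hR C HC) (hR D HD) (hRF C D HC HD F HF)
                                   (hRF C D HC HD G HG) (hRN C D HC HD F G HF HG a Ha)))
              (whiskR a (v D HD))) /\
      (forall C HC, lc_equiv (@isLNT) (v C HC)) /\
      (forall C HC, lc_equiv (@isLTotNT) (v C HC))) /\
    (* restriction to RCat ~ LCat: L and R preserve total 2-cells *)
    (forall (X Y : RData) (HX : isRC X) (HY : isRC Y) (F G : FData X Y)
            (HF : isRFunctor F) (HG : isRFunctor G) (a : NT F G) (Ha : isRNT a),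
        isRTotNT a -> isLTotNT (LN HX HY HF HG Ha)) /\
    (forall (C D : LData) (HC : isLC C) (HD : isLC D) (F G : FData C D)
            (HF : isLFunctor F) (HG : isLFunctor G) (a : NT F G),
        isLTotNT a -> isRTotNT (RN HC HD HF HG a)).
Proof.
  exists (fun X HX => LD_isLC X HX), (fun C HC => @RD_isRC C HC),
    (fun X Y HX HY F HF => LF_isLFunctor X Y HX HY F HF),
    (fun C D HC HD F HF => @RF_isRFunctor C D HC HD F HF),
    (fun C D HC HD F G HF HG a Ha => hRN_proof C D HC HD F G HF HG a Ha).
  split; [exact LN_isLNT|].
  split.
  { exists Ufun. split; [exact Ufun_isRFunctor|]. split; [exact U_feq|]. split; [exact U_nteq|].
    split; intros X HX; [exact (proj1 (U_equiv X HX)) | exact (proj2 (U_equiv X HX))]. }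
  split.
  { exists vfun. split; [exact vfun_isLFunctor|]. split; [exact V_feq|]. split; [exact V_nteq|].
    split; intros C HC; [exact (proj1 (V_equiv C HC)) | exact (proj2 (V_equiv C HC))]. }
  split; [exact LN_tot | exact RN_tot].
Qed.
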